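(* Let $C\subset\mathbb{R}^3$ be a polyhedral convex cap, $Z$ an infinitesimal isometric deformation of $C$ with vertical component $u$, and $p$ a vertex of $C$ in the interior of $C$. For each edge $e$ of the triangulation incident to $p$, the sign of $u(y)-u(p)$ is the same for all points $y\in e\setminus\{p\}$. Then it is impossible that $u(y)-u(p)>0$ on every edge incident to $p$, and it is impossible that $u(y)-u(p)<0$ on every edge incident to $p$ (the link of $C$ at $p$ can neither go up nor go down).
   Context: A polyhedral convex cap is a convex polyhedral surface $C$ in $\mathbb{R}^3$ (boundary of a locally finite intersection of half-spaces), with boundary $\partial C$, homeomorphic to the closed disc, such that $\partial C$ lies in the horizontal plane and the orthogonal projection onto this plane is a bijection between $C$ and the domain bounded by $\partial C$; it may have infinitely many vertices accumulating at $\partial C$. An infinitesimal isometric deformation of $C$ consists of a triangulation of the faces of $C$ with no new vertices and a Killing field of $\mathbb{R}^3$ on each triangle, Killing fields of adjacent triangles coinciding on the common edge; it yields a continuous vector field $Z$ on the interior of $C$, and $u$ denotes its vertical component. The link of $C$ at $p$ is the spherical polygon obtained by intersecting the triangulated $C$ with a small sphere centred at $p$ and rescaling to the unit sphere; a vertex of the link goes up (resp. down) if $u-u(p)$ is positive (resp. negative) on the corresponding edge. *)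

(* Defs.v *)
From Stdlib Require Import Reals List.
Open Scope R_scope.

Record vec := V { vx : R; vy : R; vz : R }.
Definition vadd (a b : vec) : vec := V (vx a + vx b) (vy a + vy b) (vz a + vz b).
Definition vsub (a b : vec) : vec := V (vx a - vx b) (vy a - vy b) (vz a - vz b).
Definition vscal (t : R) (a : vec) : vec := V (t * vx a) (t * vy a) (t * vz a).
Definition cross (a b : vec) : vec :=
  V (vy a * vz b - vz a * vy b) (vz a * vx b - vx a * vz b) (vx a * vy b - vy a * vx b).
Definition vzero : vec := V 0 0 0.
Definition dist2 (a b : vec) : R := (vx a - vx b)^2 + (vy a - vy b)^2 + (vz a - vz b)^2.

Definition pdist2 (x y x' y' : R) : R := (x - x')^2 + (y - y')^2.
Definition interior2 (D : R -> R -> Prop) (x y : R) : Prop :=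
  exists e, 0 < e /\ forall x' y', pdist2 x' y' x y < e -> D x' y'.
Definition convex2 (D : R -> R -> Prop) : Prop :=
  forall x1 y1 x2 y2 t, D x1 y1 -> D x2 y2 -> 0 <= t <= 1 ->
    D ((1 - t) * x1 + t * x2) ((1 - t) * y1 + t * y2).
Definition bounded2 (D : R -> R -> Prop) : Prop :=
  exists M, forall x y, D x y -> x^2 + y^2 <= M.
Definition closed2 (D : R -> R -> Prop) : Prop :=
  forall x y, (forall e, 0 < e -> exists x' y', D x' y' /\ pdist2 x' y' x y < e) -> D x y.
Definition concave_on (D : R -> R -> Prop) (g : R -> R -> R) : Prop :=
  forall x1 y1 x2 y2 t, D x1 y1 -> D x2 y2 -> 0 <= t <= 1 ->
    (1 - t) * g x1 y1 + t * g x2 y2 <= g ((1 - t) * x1 + t * x2) ((1 - t) * y1 + t * y2).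
Definition cont_on (D : R -> R -> Prop) (g : R -> R -> R) : Prop :=
  forall x y, D x y -> forall e, 0 < e -> exists d, 0 < d /\
    forall x' y', D x' y' -> pdist2 x' y' x y < d -> Rabs (g x' y' - g x y) < e.

Definition aff (abc : R * R * R) (x y : R) : R :=
  let '(a, b, c) := abc in a * x + b * y + c.
Definition min_aff (h0 : R * R * R) (l : list (R * R * R)) (x y : R) : R :=
  fold_right (fun abc m => Rmin (aff abc x y) m) (aff h0 x y) l.

(** locally (near every interior point of D) g is the minimum of finitely many
    affine functions: locally finite intersection of half-spaces *)
Definition locally_polyhedral (D : R -> R -> Prop) (g : R -> R -> R) : Prop :=
  forall x y, interior2 D x y -> exists e h0 l, 0 < e /\
    forall x' y', pdist2 x' y' x y < e -> g x' y' = min_aff h0 l x' y'.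

(** C = { (x, y, f x y) | D x y }: the projection to the horizontal plane is a
    bijection onto the compact convex domain D (with nonempty interior, hence a
    closed disc); f is continuous, constant (= h) on the boundary of D
    (boundary of C in a horizontal plane), and, for s = 1 or s = -1 (cap
    above or below its boundary plane), s * f is concave and locally the
    minimum of finitely many affine functions. *)
Definition polyhedral_convex_cap (D : R -> R -> Prop) (f : R -> R -> R) : Prop :=
  convex2 D /\ bounded2 D /\ closed2 D /\ (exists x y, interior2 D x y) /\
  cont_on D f /\
  (exists h, forall x y, D x y -> ~ interior2 D x y -> f x y = h) /\
  exists s, (s = 1 \/ s = -1) /\
    concave_on D (fun x y => s * f x y) /\
    locally_polyhedral D (fun x y => s * f x y).

Definition inC (D : R -> R -> Prop) (f : R -> R -> R) (p : vec) : Prop :=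
  D (vx p) (vy p) /\ vz p = f (vx p) (vy p).
Definition inC_int (D : R -> R -> Prop) (f : R -> R -> R) (p : vec) : Prop :=
  interior2 D (vx p) (vy p) /\ vz p = f (vx p) (vy p).

(** p is a vertex of C lying in the interior of C: C is not, near p, affine
    along any horizontal direction v (i.e. p is neither in the relative
    interior of a face nor of an edge of C). *)
Definition is_vertexC (D : R -> R -> Prop) (f : R -> R -> R) (p : vec) : Prop :=
  inC_int D f p /\
  ~ (exists v1 v2 c e, (v1 <> 0 \/ v2 <> 0) /\ 0 < e /\
       forall x y t, pdist2 x y (vx p) (vy p) < e ->
         pdist2 (x + t * v1) (y + t * v2) (vx p) (vy p) < e ->
         f (x + t * v1) (y + t * v2) = f x y + t * c).

Definition tri := (vec * vec * vec)%type.
Definition in_tri (T : tri) (x : vec) : Prop :=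
  let '(a, b, c) := T in
  exists l1 l2 l3, 0 <= l1 /\ 0 <= l2 /\ 0 <= l3 /\ l1 + l2 + l3 = 1 /\
    x = vadd (vscal l1 a) (vadd (vscal l2 b) (vscal l3 c)).
Definition is_vert (T : tri) (v : vec) : Prop :=
  let '(a, b, c) := T in v = a \/ v = b \/ v = c.
Definition nondegenerate (T : tri) : Prop :=
  let '(a, b, c) := T in cross (vsub b a) (vsub c a) <> vzero.

(** intersection of T with T' is the convex hull of their common vertices *)
Definition meets_in_common_face (T T' : tri) : Prop :=
  forall x, in_tri T x -> in_tri T' x ->
  let '(a, b, c) := T in
  exists l1 l2 l3, 0 <= l1 /\ 0 <= l2 /\ 0 <= l3 /\ l1 + l2 + l3 = 1 /\
    x = vadd (vscal l1 a) (vadd (vscal l2 b) (vscal l3 c)) /\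
    (0 < l1 -> is_vert T' a) /\ (0 < l2 -> is_vert T' b) /\ (0 < l3 -> is_vert T' c).

(** A triangulation of the faces of C with no new vertices, indexed by I:
    nondegenerate triangles contained in C, covering the interior of C,
    locally finite in the interior of C, pairwise distinct and meeting
    edge-to-edge; their vertices in the interior of C are vertices of C. *)
Definition triangulation (D : R -> R -> Prop) (f : R -> R -> R) (I : Type) (T : I -> tri) : Prop :=
  (forall i, nondegenerate (T i)) /\
  (forall i x, in_tri (T i) x -> inC D f x) /\
  (forall p, inC_int D f p -> exists i, in_tri (T i) p) /\
  (forall p, inC_int D f p -> exists e (l : list I), 0 < e /\
     forall i, (exists x, in_tri (T i) x /\ dist2 x p < e) -> In i l) /\
  (forall i j, i <> j -> exists v, is_vert (T i) v /\ ~ is_vert (T j) v) /\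
  (forall i j, i <> j -> meets_in_common_face (T i) (T j)) /\
  (forall i v, is_vert (T i) v -> inC_int D f v -> is_vertexC D f v).

Record killing := Killing { ktr : vec; krot : vec }.
Definition kapp (k : killing) (x : vec) : vec := vadd (ktr k) (cross (krot k) x).

Definition seg (v w : vec) (t : R) : vec := vadd v (vscal t (vsub w v)).

(** An infinitesimal isometric deformation of C: a triangulation T, a Killing
    field K i on each triangle, Killing fields of triangles sharing an edge
    coinciding on that edge; Z is the resulting vector field on the interior
    of C. *)
Definition inf_isometric_deformation (D : R -> R -> Prop) (f : R -> R -> R)
    (I : Type) (T : I -> tri) (K : I -> killing) (Z : vec -> vec) : Prop :=
  triangulation D f I T /\
  (forall i j v w, v <> w -> is_vert (T i) v -> is_vert (T i) w ->
     is_vert (T j) v -> is_vert (T j) w ->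
     forall t, 0 <= t <= 1 -> kapp (K i) (seg v w t) = kapp (K j) (seg v w t)) /\
  (forall i x, in_tri (T i) x -> inC_int D f x -> Z x = kapp (K i) x).

Definition incident_edge (I : Type) (T : I -> tri) (p q : vec) : Prop :=
  exists i, is_vert (T i) p /\ is_vert (T i) q /\ q <> p.

Definition on_edge_minus_p (p q y : vec) : Prop :=
  exists t, 0 < t <= 1 /\ y = seg p q t.

(* Main.v *)
Require Import Defs.
From Stdlib Require Import Reals Lra List Classical ClassicalEpsilon.
Open Scope R_scope.


Lemma vec_eq : forall a b : vec, vx a = vx b -> vy a = vy b -> vz a = vz b -> a = b.
Proof. intros [] [] ? ? ?; simpl in *; subst; reflexivity. Qed.

Definition den3 (a b c : vec) := (vx b - vx a)*(vy c - vy a) - (vy b - vy a)*(vx c - vx a).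
Definition lam1 a b c x y := ((vx b - x)*(vy c - y) - (vy b - y)*(vx c - x)) / den3 a b c.
Definition lam2 a b c x y := ((vx c - x)*(vy a - y) - (vy c - y)*(vx a - x)) / den3 a b c.
Definition lam3 a b c x y := ((vx a - x)*(vy b - y) - (vy a - y)*(vx b - x)) / den3 a b c.
Definition FT3 a b c x y := lam1 a b c x y * vz a + lam2 a b c x y * vz b + lam3 a b c x y * vz c.

Definition in2 (T : tri) (x y : R) : Prop := exists X, in_tri T X /\ vx X = x /\ vy X = y.

Definition aff2 (F : R -> R -> R) (cx cy : R) :=
  forall x y x0 y0, F x y = F x0 y0 + (x - x0) * cx + (y - y0) * cy.

Lemma lam1_aff a b c : aff2 (lam1 a b c) (- (vy c - vy b) / den3 a b c) ((vx c - vx b) / den3 a b c).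
Proof. intros x y x0 y0. unfold lam1, Rdiv. ring. Qed.
Lemma lam2_aff a b c : aff2 (lam2 a b c) (- (vy a - vy c) / den3 a b c) ((vx a - vx c) / den3 a b c).
Proof. intros x y x0 y0. unfold lam2, Rdiv. ring. Qed.
Lemma lam3_aff a b c : aff2 (lam3 a b c) (- (vy b - vy a) / den3 a b c) ((vx b - vx a) / den3 a b c).
Proof. intros x y x0 y0. unfold lam3, Rdiv. ring. Qed.

Definition FTcx a b c := (- (vy c - vy b) / den3 a b c) * vz a + (- (vy a - vy c) / den3 a b c) * vz b
   + (- (vy b - vy a) / den3 a b c) * vz c.
Definition FTcy a b c := ((vx c - vx b) / den3 a b c) * vz a + ((vx a - vx c) / den3 a b c) * vz b
   + ((vx b - vx a) / den3 a b c) * vz c.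
Lemma FT3_aff a b c : aff2 (FT3 a b c) (FTcx a b c) (FTcy a b c).
Proof. intros x y x0 y0. unfold FT3, FTcx, FTcy, lam1, lam2, lam3, Rdiv. ring. Qed.

Lemma lam_sum a b c x y : den3 a b c <> 0 -> lam1 a b c x y + lam2 a b c x y + lam3 a b c x y = 1.
Proof. intros H. unfold lam1, lam2, lam3. unfold den3 in *. field. exact H. Qed.

Lemma lam_comb_x a b c x y : den3 a b c <> 0 ->
  x = lam1 a b c x y * vx a + lam2 a b c x y * vx b + lam3 a b c x y * vx c.
Proof. intros H. unfold lam1, lam2, lam3. unfold den3 in *. field. exact H. Qed.
Lemma lam_comb_y a b c x y : den3 a b c <> 0 ->
  y = lam1 a b c x y * vy a + lam2 a b c x y * vy b + lam3 a b c x y * vy c.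
Proof. intros H. unfold lam1, lam2, lam3. unfold den3 in *. field. exact H. Qed.

Section Comb.
Variables (a b c : vec) (l1 l2 l3 : R).
Hypothesis Hd : den3 a b c <> 0.
Hypothesis Hs : l1 + l2 + l3 = 1.
Let x := l1 * vx a + l2 * vx b + l3 * vx c.
Let y := l1 * vy a + l2 * vy b + l3 * vy c.
Lemma lam1_comb : lam1 a b c x y = l1.
Proof. unfold x, y, lam1. replace l1 with (1 - l2 - l3) by lra. unfold den3 in *. field. exact Hd. Qed.
Lemma lam2_comb : lam2 a b c x y = l2.
Proof. unfold x, y, lam2. replace l1 with (1 - l2 - l3) by lra. unfold den3 in *. field. exact Hd. Qed.
Lemma lam3_comb : lam3 a b c x y = l3.
Proof. unfold x, y, lam3. replace l1 with (1 - l2 - l3) by lra. unfold den3 in *. field. exact Hd. Qed.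
End Comb.


Lemma in_tri_comp a b c X : in_tri (a,b,c) X -> exists l1 l2 l3,
  0 <= l1 /\ 0 <= l2 /\ 0 <= l3 /\ l1 + l2 + l3 = 1 /\
  vx X = l1 * vx a + l2 * vx b + l3 * vx c /\
  vy X = l1 * vy a + l2 * vy b + l3 * vy c /\
  vz X = l1 * vz a + l2 * vz b + l3 * vz c.
Proof.
  intros (l1 & l2 & l3 & H1 & H2 & H3 & H4 & ->).
  exists l1, l2, l3; simpl; repeat split; try lra.
Qed.

Lemma in_tri_mk a b c l1 l2 l3 X : 0 <= l1 -> 0 <= l2 -> 0 <= l3 -> l1 + l2 + l3 = 1 ->
  vx X = l1 * vx a + l2 * vx b + l3 * vx c ->
  vy X = l1 * vy a + l2 * vy b + l3 * vy c ->
  vz X = l1 * vz a + l2 * vz b + l3 * vz c -> in_tri (a,b,c) X.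
Proof.
  intros. exists l1, l2, l3; repeat split; auto. apply vec_eq; simpl; lra.
Qed.

Lemma in2_iff a b c x y : den3 a b c <> 0 ->
  (in2 (a,b,c) x y <-> 0 <= lam1 a b c x y /\ 0 <= lam2 a b c x y /\ 0 <= lam3 a b c x y).
Proof.
  intros Hd; split.
  - intros (X & HX & <- & <-).
    destruct (in_tri_comp _ _ _ _ HX) as (l1 & l2 & l3 & H1 & H2 & H3 & H4 & Ex & Ey & Ez).
    rewrite Ex, Ey, lam1_comb, lam2_comb, lam3_comb; auto.
  - intros (H1 & H2 & H3). exists (V x y (FT3 a b c x y)); repeat split; simpl; auto.
    apply in_tri_mk with (lam1 a b c x y) (lam2 a b c x y) (lam3 a b c x y); simpl; auto.
    + apply lam_sum; auto.
    + apply lam_comb_x; auto.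
    + apply lam_comb_y; auto.
Qed.

Lemma in_tri_z a b c X : den3 a b c <> 0 -> in_tri (a,b,c) X -> vz X = FT3 a b c (vx X) (vy X).
Proof.
  intros Hd HX.
  destruct (in_tri_comp _ _ _ _ HX) as (l1 & l2 & l3 & H1 & H2 & H3 & H4 & Ex & Ey & Ez).
  unfold FT3. rewrite Ex, Ey, lam1_comb, lam2_comb, lam3_comb; auto.
Qed.

Lemma FT3_v1 a b c : den3 a b c <> 0 -> FT3 a b c (vx a) (vy a) = vz a.
Proof. intros Hd. unfold FT3, lam1, lam2, lam3. unfold den3 in *. field. auto. Qed.
Lemma FT3_v2 a b c : den3 a b c <> 0 -> FT3 a b c (vx b) (vy b) = vz b.
Proof. intros Hd. unfold FT3, lam1, lam2, lam3. unfold den3 in *. field. auto. Qed.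
Lemma FT3_v3 a b c : den3 a b c <> 0 -> FT3 a b c (vx c) (vy c) = vz c.
Proof. intros Hd. unfold FT3, lam1, lam2, lam3. unfold den3 in *. field. auto. Qed.

Lemma sq_pos x : x <> 0 -> 0 < x * x.
Proof. intros H. destruct (Rlt_or_le x 0). nra. assert (0 < x) by lra. nra. Qed.
Lemma sq_nn x : 0 <= x * x.
Proof. apply Rle_0_sqr. Qed.

Lemma aff2_path F cx cy x0 y0 vx0 vy0 s : aff2 F cx cy ->
  F (x0 + s * vx0) (y0 + s * vy0) = F x0 y0 + s * (cx * vx0 + cy * vy0).
Proof. intros H. rewrite (H _ _ x0 y0). ring. Qed.

Lemma cs_ineq a b c d : (a*c + b*d) * (a*c + b*d) <= (a*a + b*b) * (c*c + d*d).
Proof. assert (0 <= (a*d - b*c)*(a*d - b*c)) by apply Rle_0_sqr.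
  assert (E: (a*a+b*b)*(c*c+d*d) - (a*c+b*d)*(a*c+b*d) = (a*d-b*c)*(a*d-b*c)) by ring. lra. Qed.

Lemma aff2_neg F cx cy x0 y0 : aff2 F cx cy -> F x0 y0 < 0 ->
  exists r, 0 < r /\ forall x y, pdist2 x y x0 y0 < r -> F x y < 0.
Proof.
  intros H Hn. set (m := F x0 y0) in *.
  exists (m * m / (cx*cx + cy*cy + 1)). split.
  - apply Rdiv_lt_0_compat. apply sq_pos; intro; lra. pose proof (sq_nn cx); pose proof (sq_nn cy); lra.
  - intros x y Hp. unfold pdist2 in Hp. rewrite (H x y x0 y0). fold m.
    set (L := (x - x0) * cx + (y - y0) * cy).
    assert (HL : L * L <= (cx*cx + cy*cy) * ((x-x0)*(x-x0) + (y-y0)*(y-y0))).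
    { unfold L. replace ((x - x0) * cx + (y - y0) * cy) with (cx*(x-x0) + cy*(y-y0)) by ring. apply cs_ineq. }
    assert (Hq : ((x-x0)*(x-x0) + (y-y0)*(y-y0)) * (cx*cx+cy*cy+1) < m*m).
    { replace ((x - x0) ^ 2 + (y - y0) ^ 2) with ((x-x0)*(x-x0) + (y-y0)*(y-y0)) in Hp by ring.
      apply Rmult_lt_compat_r with (r := cx*cx+cy*cy+1) in Hp; [|pose proof (sq_nn cx); pose proof (sq_nn cy); lra].
      unfold Rdiv in Hp. rewrite Rmult_assoc, Rinv_l, Rmult_1_r in Hp; nra. }
    assert (HLm : L*L < m*m) by nra.
    assert (HmL : m + L < 0).
    { destruct (Rlt_or_le (m+L) 0) as [h|h]; auto.
      assert (0 < L - m) by lra.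
      assert (0 <= (m+L)*(L-m)) by (apply Rmult_le_pos; lra). nra. }
    unfold L in HmL. lra.
Qed.

Lemma aff2_pos F cx cy x0 y0 : aff2 F cx cy -> 0 < F x0 y0 ->
  exists r, 0 < r /\ forall x y, pdist2 x y x0 y0 < r -> 0 < F x y.
Proof.
  intros H Hp. destruct (aff2_neg (fun x y => - F x y) (-cx) (-cy) x0 y0) as (r & Hr & Hf).
  - intros x y a b. rewrite (H x y a b). ring.
  - lra.
  - exists r; split; auto. intros x y Hxy. specialize (Hf x y Hxy). simpl in Hf. lra.
Qed.


Lemma mono_local (h : R -> R) (a b : R) : a <= b ->
  (forall t, a <= t < b -> exists d, 0 < d /\ forall s, t < s < t + d -> s <= b -> h s <= h t) ->
  (forall t, a < t <= b -> exists d, 0 < d /\ forall s, t - d < s < t -> a <= s -> h t <= h s) ->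
  h b <= h a.
Proof.
  intros Hab HR HL.
  set (E := fun x => a <= x <= b /\ forall y, a <= y <= x -> h y <= h a).
  assert (Hb : bound E) by (exists b; intros x [[_ Hx] _]; exact Hx).
  assert (Ha : exists x, E x) by (exists a; split; [lra| intros y Hy; replace y with a by lra; lra]).
  destruct (completeness E Hb Ha) as [m [Hub Hlub]].
  assert (Ham : a <= m) by (apply Hub; split; [lra| intros y Hy; replace y with a by lra; lra]).
  assert (Hmb : m <= b) by (apply Hlub; intros x [[_ Hx] _]; exact Hx).
  assert (Hlt : forall y, a <= y < m -> h y <= h a).
  { intros y Hy. destruct (classic (exists x, E x /\ y < x)) as [(x & [_ Hx] & Hyx)|Hn].
    - apply Hx; lra.
    - exfalso. assert (m <= y); [|lra]. apply Hlub. intros x Ex.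
      destruct (Rle_or_lt x y); auto. exfalso; apply Hn; eauto. }
  assert (Hm : h m <= h a).
  { destruct (Req_dec m a) as [->|Hne]; [lra|].
    destruct (HL m ltac:(lra)) as (d & Hd & Hd').
    set (s := Rmax a (m - d/2)).
    assert (Hs1 : a <= s) by apply Rmax_l.
    assert (Hs2 : m - d/2 <= s) by apply Rmax_r.
    assert (Hs3 : s < m) by (unfold s; apply Rmax_lub_lt; lra).
    pose proof (Hd' s ltac:(lra) Hs1). pose proof (Hlt s ltac:(lra)). lra. }
  destruct (Req_dec m b) as [<-|Hne]; auto.
  exfalso. destruct (HR m ltac:(lra)) as (d & Hd & Hd').
  set (x' := Rmin (m + d/2) b).
  assert (Hx1 : x' <= m + d/2) by apply Rmin_l.
  assert (Hx2 : x' <= b) by apply Rmin_r.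
  assert (x' <= m).
  { apply Hub. split. unfold x'. split. apply Rmin_glb; lra. apply Rmin_r.
    intros y Hy. destruct (Rle_or_lt y m).
    - destruct (Req_dec y m) as [->|]; auto. apply Hlt; lra.
    - pose proof (Hd' y ltac:(lra) ltac:(lra)). lra. }
  assert (m < x') by (unfold x'; apply Rmin_glb_lt; lra). lra.
Qed.

Lemma mono_local2 (h : R -> R) (a b : R) :
  (forall t, a <= t < b -> exists d, 0 < d /\ forall s, t < s < t + d -> s <= b -> h s <= h t) ->
  (forall t, a < t <= b -> exists d, 0 < d /\ forall s, t - d < s < t -> a <= s -> h t <= h s) ->
  forall x y, a <= x -> x <= y -> y <= b -> h y <= h x.
Proof.
  intros HR HL x y Hx Hxy Hy. apply mono_local; auto.
  - intros t Ht. destruct (HR t ltac:(lra)) as (d & Hd & Hq). exists d; split; auto.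
    intros s Hs Hs'. apply Hq; lra.
  - intros t Ht. destruct (HL t ltac:(lra)) as (d & Hd & Hq). exists d; split; auto.
    intros s Hs Hs'. apply Hq; lra.
Qed.

Lemma const_local (h : R -> R) (a b : R) :
  (forall t, a <= t < b -> exists d, 0 < d /\ forall s, t < s < t + d -> s <= b -> h s = h t) ->
  (forall t, a < t <= b -> exists d, 0 < d /\ forall s, t - d < s < t -> a <= s -> h t = h s) ->
  forall x, a <= x <= b -> h x = h a.
Proof.
  intros HR HL x Hx.
  assert (h x <= h a).
  { apply (mono_local2 h a b); try lra.
    - intros t Ht. destruct (HR t Ht) as (d & Hd & Hq). exists d; split; auto.
      intros s Hs Hs'. rewrite (Hq s Hs Hs'); lra.
    - intros t Ht. destruct (HL t Ht) as (d & Hd & Hq). exists d; split; auto.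
      intros s Hs Hs'. rewrite (Hq s Hs Hs'); lra. }
  assert (- h x <= - h a).
  { apply (mono_local2 (fun t => - h t) a b); try lra.
    - intros t Ht. destruct (HR t Ht) as (d & Hd & Hq). exists d; split; auto.
      intros s Hs Hs'. rewrite (Hq s Hs Hs'); lra.
    - intros t Ht. destruct (HL t Ht) as (d & Hd & Hq). exists d; split; auto.
      intros s Hs Hs'. rewrite (Hq s Hs Hs'); lra. }
  lra.
Qed.

Lemma pigeon {I : Type} (L : list I) (C : I -> R -> Prop) (t eta : R) : 0 < eta ->
  (forall s, t < s < t + eta -> exists i, In i L /\ C i s) ->
  exists i, In i L /\ forall e, 0 < e -> exists s, t < s < t + e /\ C i s.
Proof.
  revert eta. induction L as [|i L IH]; intros eta Heta Hcov.
  - destruct (Hcov (t + eta/2) ltac:(lra)) as (i & [] & _).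
  - destruct (classic (forall e, 0 < e -> exists s, t < s < t + e /\ C i s)) as [Hi|Hi].
    + exists i; split; [left; auto| auto].
    + apply not_all_ex_not in Hi. destruct Hi as [e1 He1].
      apply imply_to_and in He1. destruct He1 as [He1 Hn].
      destruct (IH (Rmin eta e1)) as (j & Hj & Hj').
      * apply Rmin_glb_lt; auto.
      * intros s Hs. destruct (Hcov s) as (k & Hk & Hk').
        { pose proof (Rmin_l eta e1); lra. }
        destruct Hk as [<-|Hk]; eauto.
        exfalso. apply Hn. exists s. split; auto. pose proof (Rmin_r eta e1); lra.
      * exists j; split; [right; auto| auto].
Qed.


Section Graph.
Variables (D : R -> R -> Prop) (f : R -> R -> R).

Lemma graph_dep a b c mu nu :
  (forall X, in_tri (a,b,c) X -> inC D f X) -> (mu <> 0 \/ nu <> 0) ->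
  mu * (vx b - vx a) + nu * (vx c - vx a) = 0 ->
  mu * (vy b - vy a) + nu * (vy c - vy a) = 0 ->
  mu * (vz b - vz a) + nu * (vz c - vz a) = 0.
Proof.
  intros HC Hmn Hx Hy.
  set (e := 1 / (3 * (Rabs mu + Rabs nu + 1))).
  assert (Hpos : 0 < Rabs mu + Rabs nu + 1) by (pose proof (Rabs_pos mu); pose proof (Rabs_pos nu); lra).
  assert (He : 0 < e) by (unfold e; apply Rdiv_lt_0_compat; lra).
  assert (He3 : e * Rabs mu + e * Rabs nu + e = 1/3) by (unfold e; field; lra).
  assert (Hm1 : e * mu <= e * Rabs mu) by (apply Rmult_le_compat_l; [lra| apply Rle_abs]).
  assert (Hm2 : - (e * Rabs mu) <= e * mu).
  { assert (- Rabs mu <= mu) by (pose proof (Rabs_pos mu); destruct (Rle_or_lt 0 mu); [lra| rewrite Rabs_left; lra]).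
    assert (e * (- Rabs mu) <= e * mu) by (apply Rmult_le_compat_l; lra). lra. }
  assert (Hn1 : e * nu <= e * Rabs nu) by (apply Rmult_le_compat_l; [lra| apply Rle_abs]).
  assert (Hn2 : - (e * Rabs nu) <= e * nu).
  { assert (- Rabs nu <= nu) by (pose proof (Rabs_pos nu); destruct (Rle_or_lt 0 nu); [lra| rewrite Rabs_left; lra]).
    assert (e * (- Rabs nu) <= e * nu) by (apply Rmult_le_compat_l; lra). lra. }
  pose proof (Rabs_pos mu); pose proof (Rabs_pos nu).
  set (X1 := V ((vx a + vx b + vx c)/3) ((vy a + vy b + vy c)/3) ((vz a + vz b + vz c)/3)).
  set (l1 := 1/3 - e * mu - e * nu). set (l2 := 1/3 + e * mu). set (l3 := 1/3 + e*nu).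
  set (X2 := V (l1 * vx a + l2 * vx b + l3 * vx c) (l1 * vy a + l2 * vy b + l3 * vy c)
               (l1 * vz a + l2 * vz b + l3 * vz c)).
  assert (H1 : in_tri (a,b,c) X1).
  { apply in_tri_mk with (1/3) (1/3) (1/3); unfold X1; simpl; lra. }
  assert (H2 : in_tri (a,b,c) X2).
  { apply in_tri_mk with l1 l2 l3; unfold X2, l1, l2, l3; simpl; try lra. }
  destruct (HC _ H1) as [_ Z1]. destruct (HC _ H2) as [_ Z2].
  assert (Ex : vx X2 = vx X1).
  { unfold X2, X1, l1, l2, l3; simpl.
    replace ((1 / 3 - e * mu - e * nu) * vx a + (1 / 3 + e * mu) * vx b + (1 / 3 + e * nu) * vx c)
      with ((vx a + vx b + vx c) / 3 + e * (mu * (vx b - vx a) + nu * (vx c - vx a))) by field.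
    rewrite Hx. ring. }
  assert (Ey : vy X2 = vy X1).
  { unfold X2, X1, l1, l2, l3; simpl.
    replace ((1 / 3 - e * mu - e * nu) * vy a + (1 / 3 + e * mu) * vy b + (1 / 3 + e * nu) * vy c)
      with ((vy a + vy b + vy c) / 3 + e * (mu * (vy b - vy a) + nu * (vy c - vy a))) by field.
    rewrite Hy. ring. }
  rewrite Ex, Ey, <- Z1 in Z2.
  unfold X1, X2, l1, l2, l3 in Z2; simpl in Z2.
  assert (Hz : e * (mu * (vz b - vz a) + nu * (vz c - vz a)) = 0).
  { replace (e * (mu * (vz b - vz a) + nu * (vz c - vz a))) with
      ((1 / 3 - e * mu - e * nu) * vz a + (1 / 3 + e * mu) * vz b + (1 / 3 + e * nu) * vz c
       - (vz a + vz b + vz c) / 3) by field.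
    rewrite Z2. ring. }
  apply Rmult_integral in Hz. destruct Hz; [lra| auto].
Qed.

Lemma cross_dep u v mu nu : (mu <> 0 \/ nu <> 0) ->
  mu * vx u + nu * vx v = 0 -> mu * vy u + nu * vy v = 0 -> mu * vz u + nu * vz v = 0 ->
  cross u v = vzero.
Proof.
  intros Hmn H1 H2 H3.
  assert (K : forall q, mu * q = 0 -> nu * q = 0 -> q = 0).
  { intros q A B. destruct Hmn as [Hm|Hn].
    - apply Rmult_integral in A; destruct A; [contradiction| auto].
    - apply Rmult_integral in B; destruct B; [contradiction| auto]. }
  apply vec_eq; simpl; apply K.
  - replace (mu * (vy u * vz v - vz u * vy v)) with (vz v * (mu * vy u + nu * vy v) - vy v * (mu * vz u + nu * vz v)) by ring.
    rewrite H2, H3; ring.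
  - replace (nu * (vy u * vz v - vz u * vy v)) with (vy u * (mu * vz u + nu * vz v) - vz u * (mu * vy u + nu * vy v)) by ring.
    rewrite H2, H3; ring.
  - replace (mu * (vz u * vx v - vx u * vz v)) with (vx v * (mu * vz u + nu * vz v) - vz v * (mu * vx u + nu * vx v)) by ring.
    rewrite H1, H3; ring.
  - replace (nu * (vz u * vx v - vx u * vz v)) with (vz u * (mu * vx u + nu * vx v) - vx u * (mu * vz u + nu * vz v)) by ring.
    rewrite H1, H3; ring.
  - replace (mu * (vx u * vy v - vy u * vx v)) with (vy v * (mu * vx u + nu * vx v) - vx v * (mu * vy u + nu * vy v)) by ring.
    rewrite H1, H2; ring.
  - replace (nu * (vx u * vy v - vy u * vx v)) with (vx u * (mu * vy u + nu * vy v) - vy u * (mu * vx u + nu * vx v)) by ring.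
    rewrite H1, H2; ring.
Qed.

Lemma den_nz a b c :
  (forall X, in_tri (a,b,c) X -> inC D f X) -> nondegenerate (a,b,c) -> den3 a b c <> 0.
Proof.
  intros HC Hnd H0. apply Hnd. unfold den3 in H0.
  set (ux := vx b - vx a) in *. set (uy := vy b - vy a) in *.
  set (wx := vx c - vx a) in *. set (wy := vy c - vy a) in *.
  assert (Hg : forall mu nu, (mu <> 0 \/ nu <> 0) -> mu * ux + nu * wx = 0 -> mu * uy + nu * wy = 0 ->
            cross (vsub b a) (vsub c a) = vzero).
  { intros mu nu Hmn Hx Hy. apply cross_dep with mu nu; simpl; auto.
    apply graph_dep; auto. }
  destruct (classic (wx <> 0 \/ ux <> 0)) as [Hc|Hc].
  { apply (Hg wx (- ux)).
    - destruct Hc; [left; auto| right; intro; apply H; lra].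
    - ring.
    - lra. }
  destruct (classic (wy <> 0 \/ uy <> 0)) as [Hc2|Hc2].
  { assert (wx = 0 /\ ux = 0) as [E1 E2].
    { split; apply NNPP; intro; apply Hc; auto. }
    apply (Hg wy (- uy)).
    - destruct Hc2; [left; auto| right; intro; apply H; lra].
    - rewrite E1, E2; ring.
    - ring. }
  assert (wx = 0 /\ ux = 0) as [E1 E2] by (split; apply NNPP; intro; apply Hc; auto).
  assert (wy = 0 /\ uy = 0) as [E3 E4] by (split; apply NNPP; intro; apply Hc2; auto).
  apply (Hg 1 0).
  - left; lra.
  - rewrite E2; ring.
  - rewrite E4; ring.
Qed.
End Graph.


Definition sqx t := if Rlt_dec t 1 then 1 else if Rlt_dec t 2 then 3 - 2 * t
  else if Rlt_dec t 3 then -1 else if Rlt_dec t 4 then 2 * t - 7 else 1.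
Definition sqy t := if Rlt_dec t 1 then -1 + 2 * t else if Rlt_dec t 2 then 1
  else if Rlt_dec t 3 then 5 - 2 * t else if Rlt_dec t 4 then -1 else 2 * t - 9.

Definition SideOK k a1 u1 a2 u2 := (k = 0 \/ k = 1 \/ k = 2 \/ k = 3 \/ k = 4) /\
  a1 * u2 - a2 * u1 = 2 /\
  forall s, k <= s <= k + 1 -> sqx s = a1 + s * u1 /\ sqy s = a2 + s * u2.

Ltac sqcase := unfold sqx, sqy;
  repeat match goal with |- context [Rlt_dec ?a ?b] => destruct (Rlt_dec a b) end; lra.

Lemma side0 : SideOK 0 1 0 (-1) 2.
Proof. split; [left; auto| split; [lra|]]. intros s Hs. split; sqcase. Qed.
Lemma side1 : SideOK 1 3 (-2) 1 0.
Proof. split; [right; left; auto| split; [lra|]]. intros s Hs. split; sqcase. Qed.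
Lemma side2 : SideOK 2 (-1) 0 5 (-2).
Proof. split; [right; right; left; auto| split; [lra|]]. intros s Hs. split; sqcase. Qed.
Lemma side3 : SideOK 3 (-7) 2 (-1) 0.
Proof. split; [right; right; right; left; auto| split; [lra|]]. intros s Hs. split; sqcase. Qed.
Lemma side4 : SideOK 4 1 0 (-9) 2.
Proof. split; [right; right; right; right; auto| split; [lra|]]. intros s Hs. split; sqcase. Qed.

Lemma side_right t : 0 <= t < 5 -> exists k a1 u1 a2 u2, SideOK k a1 u1 a2 u2 /\ k <= t < k + 1.
Proof.
  intros Ht.
  destruct (Rlt_dec t 1); [exists 0, 1, 0, (-1), 2; split; [apply side0| lra]|].
  destruct (Rlt_dec t 2); [exists 1, 3, (-2), 1, 0; split; [apply side1| lra]|].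
  destruct (Rlt_dec t 3); [exists 2, (-1), 0, 5, (-2); split; [apply side2| lra]|].
  destruct (Rlt_dec t 4); [exists 3, (-7), 2, (-1), 0; split; [apply side3| lra]|].
  exists 4, 1, 0, (-9), 2; split; [apply side4| lra].
Qed.

Lemma side_left t : 0 < t <= 5 -> exists k a1 u1 a2 u2, SideOK k a1 u1 a2 u2 /\ k < t <= k + 1.
Proof.
  intros Ht.
  destruct (Rle_dec t 1); [exists 0, 1, 0, (-1), 2; split; [apply side0| lra]|].
  destruct (Rle_dec t 2); [exists 1, 3, (-2), 1, 0; split; [apply side1| lra]|].
  destruct (Rle_dec t 3); [exists 2, (-1), 0, 5, (-2); split; [apply side2| lra]|].
  destruct (Rle_dec t 4); [exists 3, (-7), 2, (-1), 0; split; [apply side3| lra]|].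
  exists 4, 1, 0, (-9), 2; split; [apply side4| lra].
Qed.

Lemma side_range k a1 u1 a2 u2 : SideOK k a1 u1 a2 u2 -> 0 <= k /\ k + 1 <= 5.
Proof. intros [H _]; lra. Qed.

Lemma sq_bound t : 0 <= t <= 5 -> sqx t * sqx t + sqy t * sqy t <= 2.
Proof.
  intros Ht. unfold sqx, sqy.
  repeat match goal with |- context [Rlt_dec ?a ?b] => destruct (Rlt_dec a b) end; nra.
Qed.

Lemma sq_period s : 0 <= s <= 1 -> sqx (s + 4) = sqx s /\ sqy (s + 4) = sqy s.
Proof. intros Hs. split; sqcase. Qed.

Lemma side_cross k a1 u1 a2 u2 s s2 : SideOK k a1 u1 a2 u2 -> k <= s <= k + 1 -> k <= s2 <= k + 1 ->
  sqx s * sqy s2 - sqy s * sqx s2 = 2 * (s2 - s).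
Proof.
  intros (_ & Hc & H) H1 H2. destruct (H s H1) as [-> ->]. destruct (H s2 H2) as [-> ->].
  replace 2 with (a1 * u2 - a2 * u1) at 1 by auto. ring.
Qed.

Lemma side_dir k a1 u1 a2 u2 s : SideOK k a1 u1 a2 u2 -> k <= s <= k + 1 ->
  sqx s * u2 - sqy s * u1 = 2.
Proof.
  intros (_ & Hc & H) H1. destruct (H s H1) as [-> ->]. rewrite <- Hc. ring.
Qed.

Lemma ratio m Z : 0 < m -> - m <= Z <= m -> -1 <= Z / m <= 1 /\ Z = m * (Z / m).
Proof.
  intros Hm HZ. split; [|field; lra].
  split; [apply (Rmult_le_reg_r m); auto| apply (Rmult_le_reg_r m); auto];
  unfold Rdiv; rewrite Rmult_assoc, Rinv_l, Rmult_1_r; lra.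
Qed.

Lemma sq_decomp X Y : (X <> 0 \/ Y <> 0) -> exists t m, 0 <= t <= 4 /\ 0 < m /\ m * m <= X * X + Y * Y /\
  X = m * sqx t /\ Y = m * sqy t.
Proof.
  intros HXY.
  assert (HXY' : ~ (X = 0 /\ Y = 0)) by (intros [A B]; destruct HXY; auto).
  destruct (classic (Y <= X /\ - X <= Y)) as [[A1 A2]|NA].
  { assert (HX : 0 < X) by (destruct (Rle_or_lt X 0); [exfalso; apply HXY'; split; lra| auto]).
    destruct (ratio X Y HX ltac:(lra)) as [R1 R2].
    exists ((Y / X + 1) / 2), X. destruct side0 as (_ & _ & S).
    destruct (S ((Y / X + 1) / 2)) as [E1 E2]; [lra|].
    repeat split; try lra.
    - pose proof (sq_nn Y); lra.
    - rewrite E1; ring.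
    - rewrite E2. rewrite R2 at 1. field. lra. }
  destruct (classic (X <= Y /\ - Y <= X)) as [[A1 A2]|NB].
  { assert (HY : 0 < Y) by (destruct (Rle_or_lt Y 0); [exfalso; apply HXY'; split; lra| auto]).
    destruct (ratio Y X HY ltac:(lra)) as [R1 R2].
    exists ((3 - X / Y) / 2), Y. destruct side1 as (_ & _ & S).
    destruct (S ((3 - X / Y) / 2)) as [E1 E2]; [lra|].
    repeat split; try lra.
    - pose proof (sq_nn X); lra.
    - rewrite E1. rewrite R2 at 1. field. lra.
    - rewrite E2; ring. }
  destruct (classic (X <= Y /\ Y <= - X)) as [[A1 A2]|NC].
  { assert (HX : 0 < - X) by (destruct (Rle_or_lt 0 X); [exfalso; apply HXY'; split; lra| lra]).
    destruct (ratio (- X) Y HX ltac:(lra)) as [R1 R2].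
    exists ((5 - Y / (- X)) / 2), (- X). destruct side2 as (_ & _ & S).
    destruct (S ((5 - Y / (- X)) / 2)) as [E1 E2]; [lra|].
    repeat split; try lra.
    - pose proof (sq_nn Y); lra.
    - rewrite E1; ring.
    - rewrite E2. rewrite R2 at 1. field. lra. }
  assert (A1 : Y <= X) by (apply Rnot_lt_le; intro; apply NC; split; try lra;
     apply Rnot_lt_le; intro; apply NB; split; lra).
  assert (A2 : X <= - Y) by (apply Rnot_lt_le; intro; apply NA; split; lra).
  assert (HY : 0 < - Y) by (destruct (Rle_or_lt 0 Y); [exfalso; apply HXY'; split; lra| lra]).
  destruct (ratio (- Y) X HY ltac:(lra)) as [R1 R2].
  exists ((X / (- Y) + 7) / 2), (- Y). destruct side3 as (_ & _ & S).
  destruct (S ((X / (- Y) + 7) / 2)) as [E1 E2]; [lra|].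
  repeat split; try lra.
  - pose proof (sq_nn X); lra.
  - rewrite E1. rewrite R2 at 1. field. lra.
  - rewrite E2; ring.
Qed.


Definition tden (t : tri) := let '(a,b,c) := t in den3 a b c.
Definition tl1 (t : tri) x y := let '(a,b,c) := t in lam1 a b c x y.
Definition tl2 (t : tri) x y := let '(a,b,c) := t in lam2 a b c x y.
Definition tl3 (t : tri) x y := let '(a,b,c) := t in lam3 a b c x y.
Definition tFT (t : tri) x y := let '(a,b,c) := t in FT3 a b c x y.
Definition tcx (t : tri) := let '(a,b,c) := t in FTcx a b c.
Definition tcy (t : tri) := let '(a,b,c) := t in FTcy a b c.

Lemma pd_tri x y a b c d : pdist2 x y a b <= 2 * pdist2 x y c d + 2 * pdist2 c d a b.
Proof.
  unfold pdist2.
  assert (0 <= (x - c - (c - a)) * (x - c - (c - a))) by apply Rle_0_sqr.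
  assert (0 <= (y - d - (d - b)) * (y - d - (d - b))) by apply Rle_0_sqr.
  replace ((x - a)^2) with (((x - c) + (c - a)) * ((x - c) + (c - a))) by ring.
  replace ((y - b)^2) with (((y - d) + (d - b)) * ((y - d) + (d - b))) by ring.
  nra.
Qed.

Lemma pd_nn x y a b : 0 <= pdist2 x y a b.
Proof. unfold pdist2. pose proof (pow2_ge_0 (x-a)); pose proof (pow2_ge_0 (y-b)); lra. Qed.

Lemma interior_open D x0 y0 : interior2 D x0 y0 ->
  exists r, 0 < r /\ forall x y, pdist2 x y x0 y0 < r -> interior2 D x y.
Proof.
  intros (e & He & H). exists (e/4); split; [lra|].
  intros x y Hxy. exists (e/4); split; [lra|]. intros x' y' H'.
  apply H. pose proof (pd_tri x' y' x0 y0 x y). lra.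
Qed.

Section Main.
Variables (D : R -> R -> Prop) (f : R -> R -> R) (I : Type) (T : I -> tri) (K : I -> killing)
  (Z : vec -> vec) (p : vec).
Hypothesis Hcap : polyhedral_convex_cap D f.
Hypothesis Hdef : inf_isometric_deformation D f I T K Z.
Hypothesis Hvert : is_vertexC D f p.

Let Px := vx p.
Let Py := vy p.

Lemma T_inC i X : in_tri (T i) X -> inC D f X.
Proof. destruct Hdef as [(_ & H & _) _]. apply H. Qed.

Lemma T_den i : tden (T i) <> 0.
Proof.
  unfold tden. destruct (T i) as [[a b] c] eqn:E.
  destruct Hdef as [(Hnd & HC & _) _].
  apply den_nz with D f. intros X HX. apply (HC i). rewrite E; auto.
  specialize (Hnd i). rewrite E in Hnd. auto.
Qed.

Lemma in2_T i x y : in2 (T i) x y <-> 0 <= tl1 (T i) x y /\ 0 <= tl2 (T i) x y /\ 0 <= tl3 (T i) x y.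
Proof.
  pose proof (T_den i). unfold tden, tl1, tl2, tl3 in *. destruct (T i) as [[a b] c].
  apply in2_iff; auto.
Qed.

Lemma in2_f i x y : in2 (T i) x y -> f x y = tFT (T i) x y.
Proof.
  intros (X & HX & <- & <-). pose proof (T_den i). destruct (T_inC i X HX) as [_ Hz].
  rewrite <- Hz. unfold tden, tFT in *. destruct (T i) as [[a b] c]. apply in_tri_z; auto.
Qed.

Lemma in2_pt i x y : in2 (T i) x y -> in_tri (T i) (V x y (f x y)).
Proof.
  intros H. pose proof H as (X & HX & Ex & Ey). destruct (T_inC i X HX) as [_ Hz].
  replace (V x y (f x y)) with X; auto. apply vec_eq; simpl; auto. rewrite Hz, Ex, Ey; auto.
Qed.

Lemma tFT_aff i : aff2 (tFT (T i)) (tcx (T i)) (tcy (T i)).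
Proof. unfold tFT, tcx, tcy. destruct (T i) as [[a b] c]. apply FT3_aff. Qed.

Lemma tl_aff1 i : exists cx cy, aff2 (tl1 (T i)) cx cy.
Proof. unfold tl1. destruct (T i) as [[a b] c]. eexists; eexists; apply lam1_aff. Qed.
Lemma tl_aff2 i : exists cx cy, aff2 (tl2 (T i)) cx cy.
Proof. unfold tl2. destruct (T i) as [[a b] c]. eexists; eexists; apply lam2_aff. Qed.
Lemma tl_aff3 i : exists cx cy, aff2 (tl3 (T i)) cx cy.
Proof. unfold tl3. destruct (T i) as [[a b] c]. eexists; eexists; apply lam3_aff. Qed.

Lemma p_int : interior2 D Px Py.
Proof. destruct Hvert as [[H _] _]. exact H. Qed.
Lemma p_z : vz p = f Px Py.
Proof. destruct Hvert as [[_ H] _]. exact H. Qed.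

Lemma far_tri i : ~ in2 (T i) Px Py ->
  exists r, 0 < r /\ forall x y, pdist2 x y Px Py < r -> ~ in2 (T i) x y.
Proof.
  intros Hn. rewrite in2_T in Hn.
  assert (tl1 (T i) Px Py < 0 \/ tl2 (T i) Px Py < 0 \/ tl3 (T i) Px Py < 0) as [H|[H|H]].
  { destruct (Rlt_or_le (tl1 (T i) Px Py) 0); auto.
    destruct (Rlt_or_le (tl2 (T i) Px Py) 0); auto.
    destruct (Rlt_or_le (tl3 (T i) Px Py) 0); auto. exfalso; auto. }
  - destruct (tl_aff1 i) as (cx & cy & Ha). destruct (aff2_neg _ _ _ _ _ Ha H) as (r & Hr & Hf).
    exists r; split; auto. intros x y Hxy Hin. rewrite in2_T in Hin. specialize (Hf x y Hxy). lra.
  - destruct (tl_aff2 i) as (cx & cy & Ha). destruct (aff2_neg _ _ _ _ _ Ha H) as (r & Hr & Hf).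
    exists r; split; auto. intros x y Hxy Hin. rewrite in2_T in Hin. specialize (Hf x y Hxy). lra.
  - destruct (tl_aff3 i) as (cx & cy & Ha). destruct (aff2_neg _ _ _ _ _ Ha H) as (r & Hr & Hf).
    exists r; split; auto. intros x y Hxy Hin. rewrite in2_T in Hin. specialize (Hf x y Hxy). lra.
Qed.

Lemma far_list (L : list I) : exists r, 0 < r /\ forall i, In i L -> ~ in2 (T i) Px Py ->
  forall x y, pdist2 x y Px Py < r -> ~ in2 (T i) x y.
Proof.
  induction L as [|j L IH].
  - exists 1; split; [lra| intros i []].
  - destruct IH as (r & Hr & H).
    destruct (classic (in2 (T j) Px Py)) as [Hj|Hj].
    + exists r; split; auto. intros i [<-|Hi] Hn; [contradiction| apply H; auto].
    + destruct (far_tri j Hj) as (r' & Hr' & H').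
      exists (Rmin r r'); split; [apply Rmin_glb_lt; auto|].
      intros i [<-|Hi] Hn x y Hxy.
      * apply H'. pose proof (Rmin_r r r'); lra.
      * apply H; auto. pose proof (Rmin_l r r'); lra.
Qed.

Lemma good_radius : exists r (L : list I), 0 < r /\ forall x y, pdist2 x y Px Py < r ->
  interior2 D x y /\ (exists i, In i L /\ in2 (T i) x y) /\
  (forall i, in2 (T i) x y -> In i L /\ in2 (T i) Px Py).
Proof.
  destruct (interior_open D Px Py p_int) as (r0 & Hr0 & Hint).
  assert (HpC : inC_int D f p) by (destruct Hvert; auto).
  destruct Hdef as [(_ & _ & Hcov & Hlf & _) _].
  destruct (Hlf p HpC) as (e1 & L & He1 & HL).
  destruct Hcap as (_ & _ & _ & _ & Hcont & _).
  assert (HDp : D Px Py).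
  { destruct p_int as (e & He & H). apply H. unfold pdist2. replace (Px - Px) with 0 by ring.
    replace (Py - Py) with 0 by ring. simpl. lra. }
  set (eps := Rmin 1 (e1/2)).
  assert (Heps : 0 < eps) by (apply Rmin_glb_lt; lra).
  destruct (Hcont Px Py HDp eps Heps) as (d1 & Hd1 & Hc).
  destruct (far_list L) as (r2 & Hr2 & Hfar).
  set (r := Rmin (Rmin r0 d1) (Rmin r2 (e1/2))).
  assert (Hr : 0 < r) by (unfold r; repeat apply Rmin_glb_lt; lra).
  assert (Hr1 : r <= r0) by (unfold r; pose proof (Rmin_l (Rmin r0 d1) (Rmin r2 (e1/2))); pose proof (Rmin_l r0 d1); lra).
  assert (Hr2' : r <= d1) by (unfold r; pose proof (Rmin_l (Rmin r0 d1) (Rmin r2 (e1/2))); pose proof (Rmin_r r0 d1); lra).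
  assert (Hr3 : r <= r2) by (unfold r; pose proof (Rmin_r (Rmin r0 d1) (Rmin r2 (e1/2))); pose proof (Rmin_l r2 (e1/2)); lra).
  assert (Hr4 : r <= e1/2) by (unfold r; pose proof (Rmin_r (Rmin r0 d1) (Rmin r2 (e1/2))); pose proof (Rmin_r r2 (e1/2)); lra).
  exists r, L; split; auto. intros x y Hxy.
  assert (Hi : interior2 D x y) by (apply Hint; lra).
  assert (HD : D x y).
  { destruct Hi as (e & He & H). apply H. unfold pdist2. replace (x - x) with 0 by ring.
    replace (y - y) with 0 by ring. simpl. lra. }
  assert (HinL : forall i, in2 (T i) x y -> In i L).
  { intros i Hin. apply HL. exists (V x y (f x y)). split; [apply in2_pt; auto|].
    unfold dist2; simpl. fold Px Py. rewrite p_z.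
    specialize (Hc x y HD ltac:(lra)).
    assert (Habs : (f x y - f Px Py) ^ 2 < e1 / 2).
    { assert (eps <= 1) by apply Rmin_l. assert (eps <= e1/2) by apply Rmin_r.
      replace ((f x y - f Px Py) ^ 2) with (Rabs (f x y - f Px Py) * Rabs (f x y - f Px Py)).
      2: { rewrite <- (pow2_abs (f x y - f Px Py)). ring. }
      pose proof (Rabs_pos (f x y - f Px Py)). nra. }
    unfold pdist2 in Hxy. lra. }
  split; auto. split.
  - destruct (Hcov (V x y (f x y))) as (i & Hi').
    { split; simpl; auto. }
    exists i. assert (in2 (T i) x y) by (exists (V x y (f x y)); auto). split; auto.
  - intros i Hin. split; auto. apply NNPP; intro Hn.
    apply (Hfar i (HinL i Hin) Hn x y); auto. lra.
Qed.


Lemma Z_tri i x y : interior2 D x y -> in2 (T i) x y ->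
  Z (V x y (f x y)) = kapp (K i) (V x y (f x y)).
Proof.
  intros Hi Hin. destruct Hdef as (_ & _ & HZ). apply HZ. apply in2_pt; auto. split; simpl; auto.
Qed.

Lemma p_eq : V Px Py (f Px Py) = p.
Proof. apply vec_eq; simpl; auto. rewrite p_z; auto. Qed.

Lemma in2_p i : in2 (T i) Px Py -> in_tri (T i) p.
Proof. intros H. rewrite <- p_eq. apply in2_pt; auto. Qed.

Lemma Z_p i : in2 (T i) Px Py -> Z p = kapp (K i) p.
Proof. intros H. rewrite <- p_eq. apply Z_tri; auto. apply p_int. Qed.

Lemma aff2_comb F cx cy m1 m2 m3 x1 y1 x2 y2 x3 y3 : aff2 F cx cy -> m1 + m2 + m3 = 1 ->
  F (m1 * x1 + m2 * x2 + m3 * x3) (m1 * y1 + m2 * y2 + m3 * y3) =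
  m1 * F x1 y1 + m2 * F x2 y2 + m3 * F x3 y3.
Proof.
  intros H Hs. rewrite (H _ _ 0 0), (H x1 y1 0 0), (H x2 y2 0 0), (H x3 y3 0 0).
  replace m1 with (1 - m2 - m3) by lra. ring.
Qed.

Lemma lam_vals a b c : den3 a b c <> 0 ->
  lam1 a b c (vx a) (vy a) = 1 /\ lam1 a b c (vx b) (vy b) = 0 /\ lam1 a b c (vx c) (vy c) = 0 /\
  lam2 a b c (vx a) (vy a) = 0 /\ lam2 a b c (vx b) (vy b) = 1 /\ lam2 a b c (vx c) (vy c) = 0 /\
  lam3 a b c (vx a) (vy a) = 0 /\ lam3 a b c (vx b) (vy b) = 0 /\ lam3 a b c (vx c) (vy c) = 1.
Proof.
  intros Hd. unfold lam1, lam2, lam3. unfold den3 in *.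
  repeat split; field; auto.
Qed.

Lemma vert_in_tri (t : tri) v : is_vert t v -> in_tri t v.
Proof.
  destruct t as [[a b] c]. intros [ -> | [ -> | -> ]].
  - apply in_tri_mk with 1 0 0; lra.
  - apply in_tri_mk with 0 1 0; lra.
  - apply in_tri_mk with 0 0 1; lra.
Qed.

Lemma vert_contra (F : R -> R -> R) cx cy (a b c : vec) m1 m2 m3 :
  aff2 F cx cy -> m1 + m2 + m3 = 1 ->
  F (m1 * vx a + m2 * vx b + m3 * vx c) (m1 * vy a + m2 * vy b + m3 * vy c) = 1 ->
  m1 * F (vx a) (vy a) = 0 -> m2 * F (vx b) (vy b) = 0 -> m3 * F (vx c) (vy c) = 0 -> False.
Proof.
  intros Ha Hs H1 E1 E2 E3. rewrite (aff2_comb F cx cy) in H1; auto. lra.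
Qed.

Lemma vertex_all : (exists j, is_vert (T j) p) -> forall i, in_tri (T i) p -> is_vert (T i) p.
Proof.
  intros (j & Hj) i Hi.
  destruct (classic (i = j)) as [->|Hij]; auto.
  apply NNPP; intro Hnv.
  destruct Hdef as [(_ & _ & _ & _ & _ & Hmeet & _) _].
  specialize (Hmeet i j Hij p Hi (vert_in_tri _ _ Hj)).
  pose proof (T_den j) as Hdj. pose proof (T_den i) as Hdi.
  destruct (T i) as [[a b] c] eqn:Ei.
  destruct Hmeet as (m1 & m2 & m3 & H1 & H2 & H3 & Hs & Hp & V1 & V2 & V3).
  assert (Ha : a <> p) by (intro; apply Hnv; left; auto).
  assert (Hb : b <> p) by (intro; apply Hnv; right; left; auto).
  assert (Hc : c <> p) by (intro; apply Hnv; right; right; auto).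
  assert (EPx : Px = m1 * vx a + m2 * vx b + m3 * vx c) by (unfold Px; rewrite Hp; simpl; ring).
  assert (EPy : Py = m1 * vy a + m2 * vy b + m3 * vy c) by (unfold Py; rewrite Hp; simpl; ring).
  unfold tden in Hdj. destruct (T j) as [[a' b'] c'] eqn:Ej.
  pose proof (lam_vals a' b' c' Hdj) as LV.
  assert (G : forall (F : R -> R -> R) cx cy, aff2 F cx cy -> F Px Py = 1 ->
            (forall v, is_vert (a',b',c') v -> v <> p -> F (vx v) (vy v) = 0) -> False).
  { intros F cx cy HF HP Hv.
    apply (vert_contra F cx cy a b c m1 m2 m3); auto.
    - rewrite <- EPx, <- EPy; auto.
    - destruct (Rle_lt_or_eq_dec 0 m1 H1) as [h|h]; [rewrite (Hv a (V1 h) Ha); ring| rewrite <- h; ring].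
    - destruct (Rle_lt_or_eq_dec 0 m2 H2) as [h|h]; [rewrite (Hv b (V2 h) Hb); ring| rewrite <- h; ring].
    - destruct (Rle_lt_or_eq_dec 0 m3 H3) as [h|h]; [rewrite (Hv c (V3 h) Hc); ring| rewrite <- h; ring]. }
  destruct Hj as [E|[E|E]].
  - apply (G (lam1 a' b' c') _ _ (lam1_aff a' b' c')).
    + unfold Px, Py; rewrite E; tauto.
    + intros v [ -> | [ -> | -> ]] Hv; [exfalso; apply Hv; auto| tauto| tauto].
  - apply (G (lam2 a' b' c') _ _ (lam2_aff a' b' c')).
    + unfold Px, Py; rewrite E; tauto.
    + intros v [ -> | [ -> | -> ]] Hv; [tauto| exfalso; apply Hv; auto| tauto].
  - apply (G (lam3 a' b' c') _ _ (lam3_aff a' b' c')).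
    + unfold Px, Py; rewrite E; tauto.
    + intros v [ -> | [ -> | -> ]] Hv; [tauto| tauto| exfalso; apply Hv; auto].
Qed.

Lemma affine_ball_contra : (exists e cx cy, 0 < e /\ forall x y, pdist2 x y Px Py < e ->
  f x y = f Px Py + (x - Px) * cx + (y - Py) * cy) -> False.
Proof.
  intros (e & cx & cy & He & H). destruct Hvert as [_ Hn]. apply Hn.
  exists 1, 0, cx, e. split; [left; lra|]. split; auto.
  intros x y t H1 H2. fold Px Py in H1, H2 |- *. rewrite (H _ _ H2), (H _ _ H1). ring.
Qed.

Lemma face_contra i : 0 < tl1 (T i) Px Py -> 0 < tl2 (T i) Px Py -> 0 < tl3 (T i) Px Py -> False.
Proof.
  intros H1 H2 H3.
  destruct (tl_aff1 i) as (c1 & d1 & A1). destruct (tl_aff2 i) as (c2 & d2 & A2).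
  destruct (tl_aff3 i) as (c3 & d3 & A3).
  destruct (aff2_pos _ _ _ _ _ A1 H1) as (r1 & Hr1 & F1).
  destruct (aff2_pos _ _ _ _ _ A2 H2) as (r2 & Hr2 & F2).
  destruct (aff2_pos _ _ _ _ _ A3 H3) as (r3 & Hr3 & F3).
  assert (HP : in2 (T i) Px Py) by (apply in2_T; lra).
  apply affine_ball_contra. exists (Rmin r1 (Rmin r2 r3)), (tcx (T i)), (tcy (T i)).
  split; [repeat apply Rmin_glb_lt; auto|].
  intros x y Hxy.
  pose proof (Rmin_l r1 (Rmin r2 r3)). pose proof (Rmin_r r1 (Rmin r2 r3)).
  pose proof (Rmin_l r2 r3). pose proof (Rmin_r r2 r3).
  assert (Hin : in2 (T i) x y).
  { apply in2_T. repeat split; left; [apply F1| apply F2| apply F3]; lra. }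
  rewrite (in2_f _ _ _ Hin), (in2_f _ _ _ HP). apply (tFT_aff i).
Qed.

Lemma aff_path F cx cy x0 y0 v1 v2 : aff2 F cx cy -> forall s s',
  F (x0 + s' * v1) (y0 + s' * v2) = F (x0 + s * v1) (y0 + s * v2) + (s' - s) * (cx * v1 + cy * v2).
Proof. intros H s s'. rewrite (H _ _ (x0 + s * v1) (y0 + s * v2)). ring. Qed.

Lemma closed1 (g : R -> R) k s : (forall s', g s' = g s + (s' - s) * k) -> g s < 0 ->
  exists e, 0 < e /\ forall s', s < s' < s + e -> g s' < 0.
Proof.
  intros Hg Hn. exists (- g s / (Rabs k + 1)). pose proof (Rabs_pos k).
  split; [apply Rdiv_lt_0_compat; lra|]. intros s' Hs'. rewrite Hg.
  assert (Hk : (s' - s) * k <= (s' - s) * Rabs k) by (apply Rmult_le_compat_l; [lra| apply Rle_abs]).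
  assert (He : (s' - s) * (Rabs k + 1) < - g s).
  { destruct Hs' as [_ Hs']. apply (Rmult_lt_compat_r (Rabs k + 1)) in Hs'; [|lra].
    unfold Rdiv in Hs'. replace ((s + - g s * / (Rabs k + 1)) * (Rabs k + 1)) with
      (s * (Rabs k + 1) - g s) in Hs' by (field; lra). nra. }
  nra.
Qed.

Lemma conv1 (g : R -> R) k s s1 : (forall s', g s' = g s + (s' - s) * k) -> 0 <= g s -> 0 <= g s1 ->
  forall s', s <= s' <= s1 -> 0 <= g s'.
Proof.
  intros Hg H0 H1 s' Hs. rewrite Hg. rewrite Hg in H1.
  destruct (Rle_or_lt 0 k).
  - assert (0 <= (s' - s) * k) by (apply Rmult_le_pos; lra). lra.
  - assert (0 <= (s1 - s') * (- k)) by (apply Rmult_le_pos; lra). nra.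
Qed.

Lemma RN_path (L : list I) (Q : I -> Prop) x0 y0 v1 v2 s s1 : s < s1 ->
  (forall s', s < s' < s1 -> exists i, In i L /\ (Q i /\ in2 (T i) (x0 + s' * v1) (y0 + s' * v2))) ->
  exists i d, Q i /\ 0 < d /\ forall s', s <= s' <= s + d -> in2 (T i) (x0 + s' * v1) (y0 + s' * v2).
Proof.
  intros Hs Hcov.
  destruct (pigeon L (fun i s' => Q i /\ in2 (T i) (x0 + s' * v1) (y0 + s' * v2)) s (s1 - s))
    as (i & _ & Hi); [lra| intros s' Hs'; apply Hcov; lra|].
  destruct (Hi 1 ltac:(lra)) as (s2 & Hs2 & HQ & Hin2).
  assert (Hl : forall (F : R -> R -> R) cx cy, aff2 F cx cy ->
     (forall s', in2 (T i) (x0 + s' * v1) (y0 + s' * v2) -> 0 <= F (x0 + s' * v1) (y0 + s' * v2)) ->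
     0 <= F (x0 + s * v1) (y0 + s * v2)).
  { intros F cx cy HF Hpos. apply Rnot_lt_le. intro Hn.
    destruct (closed1 (fun s' => F (x0 + s' * v1) (y0 + s' * v2)) (cx * v1 + cy * v2) s) as (e & He & He');
      [intros s'; apply (aff_path F cx cy x0 y0 v1 v2 HF)| auto|].
    destruct (Hi e He) as (s3 & Hs3 & _ & Hin3).
    specialize (Hpos s3 Hin3). specialize (He' s3 Hs3). simpl in He'. lra. }
  assert (Hconv : forall (F : R -> R -> R) cx cy, aff2 F cx cy ->
     (forall s', in2 (T i) (x0 + s' * v1) (y0 + s' * v2) -> 0 <= F (x0 + s' * v1) (y0 + s' * v2)) ->
     forall s', s <= s' <= s2 -> 0 <= F (x0 + s' * v1) (y0 + s' * v2)).
  { intros F cx cy HF Hpos.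
    apply (conv1 (fun s' => F (x0 + s' * v1) (y0 + s' * v2)) (cx * v1 + cy * v2) s s2).
    - intros s'; apply (aff_path F cx cy x0 y0 v1 v2 HF).
    - apply (Hl F cx cy HF Hpos).
    - apply Hpos; auto. }
  exists i, (s2 - s). split; auto. split; [lra|]. intros s' Hs'.
  destruct (tl_aff1 i) as (c1 & d1 & A1). destruct (tl_aff2 i) as (c2 & d2 & A2).
  destruct (tl_aff3 i) as (c3 & d3 & A3).
  apply in2_T. repeat split.
  - apply (Hconv _ _ _ A1); [intros u Hu; apply in2_T in Hu; tauto| lra].
  - apply (Hconv _ _ _ A2); [intros u Hu; apply in2_T in Hu; tauto| lra].
  - apply (Hconv _ _ _ A3); [intros u Hu; apply in2_T in Hu; tauto| lra].
Qed.

Lemma LN_path (L : list I) (Q : I -> Prop) x0 y0 v1 v2 s0 s : s0 < s ->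
  (forall s', s0 < s' < s -> exists i, In i L /\ (Q i /\ in2 (T i) (x0 + s' * v1) (y0 + s' * v2))) ->
  exists i d, Q i /\ 0 < d /\ forall s', s - d <= s' <= s -> in2 (T i) (x0 + s' * v1) (y0 + s' * v2).
Proof.
  intros Hs Hcov.
  destruct (RN_path L Q x0 y0 (- v1) (- v2) (- s) (- s0)) as (i & d & HQ & Hd & H); [lra| |].
  - intros s' Hs'. destruct (Hcov (- s') ltac:(lra)) as (i & Hi & HQ & Hin).
    exists i; split; auto; split; auto.
    replace (x0 + s' * - v1) with (x0 + - s' * v1) by ring.
    replace (y0 + s' * - v2) with (y0 + - s' * v2) by ring. auto.
  - exists i, d. split; auto; split; auto. intros s' Hs'.
    specialize (H (- s') ltac:(lra)).
    replace (x0 + - s' * - v1) with (x0 + s' * v1) in H by ring.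
    replace (y0 + - s' * - v2) with (y0 + s' * v2) in H by ring. auto.
Qed.

Lemma ball_seg x y v1 v2 t r s : 0 <= s <= t ->
  pdist2 x y Px Py < r -> pdist2 (x + t * v1) (y + t * v2) Px Py < r ->
  pdist2 (x + s * v1) (y + s * v2) Px Py < r.
Proof.
  intros Hs H0 H1. destruct (Req_dec t 0) as [Ht|Ht].
  - replace s with 0 in * by lra. replace (x + 0 * v1) with x by ring. replace (y + 0 * v2) with y by ring. auto.
  - unfold pdist2 in *.
    set (q := fun u => (x + u * v1 - Px) ^ 2 + (y + u * v2 - Py) ^ 2).
    assert (Hid : (t - s) * q 0 + s * q t - t * q s = s * t * (t - s) * (v1 * v1 + v2 * v2)) by (unfold q; ring).
    assert (0 <= s * t * (t - s) * (v1 * v1 + v2 * v2)).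
    { apply Rmult_le_pos; [apply Rmult_le_pos; [apply Rmult_le_pos|]|]; try lra.
      pose proof (sq_nn v1); pose proof (sq_nn v2); lra. }
    assert (Hq0 : q 0 < r) by (unfold q; replace (x + 0 * v1) with x by ring; replace (y + 0 * v2) with y by ring; auto).
    assert (Hqt : q t < r) by (unfold q; auto).
    assert (t * q s < t * r).
    { assert ((t - s) * q 0 <= (t - s) * r) by (apply Rmult_le_compat_l; lra).
      assert (s * q t <= s * r) by (apply Rmult_le_compat_l; lra).
      destruct (Req_dec s 0) as [->|Hs0].
      - assert (0 < t) by lra. nra.
      - assert (s * q t < s * r) by (apply Rmult_lt_compat_l; lra). lra. }
    assert (0 < t) by lra.
    change (q s < r). nra.
Qed.

Lemma tFT_vert i q : is_vert (T i) q -> tFT (T i) (vx q) (vy q) = vz q.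
Proof.
  pose proof (T_den i). unfold tden, tFT in *. destruct (T i) as [[a b] c].
  intros [ -> | [ -> | -> ]]; [apply FT3_v1| apply FT3_v2| apply FT3_v3]; auto.
Qed.

Lemma pair_contra a b : (vx a <> vx b \/ vy a <> vy b) ->
  (forall j, in2 (T j) Px Py -> is_vert (T j) a /\ is_vert (T j) b) -> False.
Proof.
  intros Hab Hj.
  destruct good_radius as (r & L & Hr & Hg).
  set (v1 := vx b - vx a). set (v2 := vy b - vy a). set (c0 := vz b - vz a).
  assert (Hslope : forall i x y s s', in2 (T i) Px Py -> in2 (T i) (x + s * v1) (y + s * v2) ->
     in2 (T i) (x + s' * v1) (y + s' * v2) ->
     f (x + s' * v1) (y + s' * v2) - s' * c0 = f (x + s * v1) (y + s * v2) - s * c0).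
  { intros i x y s s' HP H1 H2. rewrite (in2_f _ _ _ H1), (in2_f _ _ _ H2).
    rewrite (aff_path _ _ _ x y v1 v2 (tFT_aff i) s s').
    destruct (Hj i HP) as [Va Vb].
    pose proof (tFT_vert i a Va). pose proof (tFT_vert i b Vb).
    assert (E : tcx (T i) * v1 + tcy (T i) * v2 = c0).
    { unfold v1, v2, c0. rewrite <- H, <- H0. rewrite (tFT_aff i (vx b) (vy b) (vx a) (vy a)). ring. }
    rewrite E. ring. }
  assert (Claim : forall x y t, 0 <= t -> pdist2 x y Px Py < r ->
            pdist2 (x + t * v1) (y + t * v2) Px Py < r ->
            f (x + t * v1) (y + t * v2) = f x y + t * c0).
  { intros x y t Ht H0 H1.
    set (h := fun s => f (x + s * v1) (y + s * v2) - s * c0).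
    assert (Hin : forall s, 0 <= s <= t -> pdist2 (x + s * v1) (y + s * v2) Px Py < r).
    { intros s Hs. apply (ball_seg x y v1 v2 t r s); auto. }
    assert (Hcov : forall s', 0 <= s' <= t -> exists i, In i L /\ (in2 (T i) Px Py /\
               in2 (T i) (x + s' * v1) (y + s' * v2))).
    { intros s' Hs'. destruct (Hg _ _ (Hin s' Hs')) as (_ & (i & HiL & Hi) & Hall).
      exists i. split; auto. split; auto. apply (Hall i Hi). }
    assert (Hc : forall s, 0 <= s <= t -> h s = h 0).
    { apply (const_local h 0 t).
      - intros s Hs. destruct (RN_path L (fun i => in2 (T i) Px Py) x y v1 v2 s t) as (i & d & HP & Hd & Hi);
          [lra| intros s' Hs'; apply Hcov; lra|].
        exists d; split; auto. intros s' Hs' Hs't. unfold h.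
        apply (Hslope i x y s s' HP); apply Hi; lra.
      - intros s Hs. destruct (LN_path L (fun i => in2 (T i) Px Py) x y v1 v2 0 s) as (i & d & HP & Hd & Hi);
          [lra| intros s' Hs'; apply Hcov; lra|].
        exists d; split; auto. intros s' Hs' Hs0. unfold h.
        symmetry. apply (Hslope i x y s s' HP); apply Hi; lra. }
    specialize (Hc t ltac:(lra)). unfold h in Hc.
    replace (x + 0 * v1) with x in Hc by ring. replace (y + 0 * v2) with y in Hc by ring. lra. }
  destruct Hvert as [_ Hn]. apply Hn. exists v1, v2, c0, r.
  split; [unfold v1, v2; destruct Hab; [left| right]; intro; apply H; lra|]. split; auto.
  intros x y t H0 H1. fold Px Py in H0, H1 |- *.
  destruct (Rle_or_lt 0 t) as [Ht|Ht]; [apply Claim; auto|].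
  specialize (Claim (x + t * v1) (y + t * v2) (- t) ltac:(lra) H1).
  replace (x + t * v1 + - t * v1) with x in Claim by ring.
  replace (y + t * v2 + - t * v2) with y in Claim by ring.
  specialize (Claim H0). lra.
Qed.

Lemma none_case : (forall j, ~ is_vert (T j) p) -> False.
Proof.
  intros Hnone.
  assert (HpC : inC_int D f p) by (destruct Hvert; auto).
  destruct Hdef as [(_ & _ & Hcov & _ & _ & Hmeet & _) _].
  destruct (Hcov p HpC) as (i0 & Hi0).
  pose proof (T_den i0) as Hd0.
  assert (HP0 : in2 (T i0) Px Py) by (exists p; auto).
  pose proof (Hnone i0) as Hn0.
  destruct (T i0) as [[a b] c] eqn:E0.
  destruct (in_tri_comp _ _ _ _ Hi0) as (l1 & l2 & l3 & H1 & H2 & H3 & Hs & Ex & Ey & Ez).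
  unfold tden in Hd0.
  assert (Lv1 : lam1 a b c Px Py = l1) by (unfold Px, Py; rewrite Ex, Ey; apply lam1_comb; auto).
  assert (Lv2 : lam2 a b c Px Py = l2) by (unfold Px, Py; rewrite Ex, Ey; apply lam2_comb; auto).
  assert (Lv3 : lam3 a b c Px Py = l3) by (unfold Px, Py; rewrite Ex, Ey; apply lam3_comb; auto).
  assert (N1 : l1 <> 1).
  { intro. apply Hn0. left. apply vec_eq; [rewrite Ex| rewrite Ey| rewrite Ez]; replace l2 with 0 by lra;
    replace l3 with 0 by lra; rewrite H; ring. }
  assert (N2 : l2 <> 1).
  { intro. apply Hn0. right; left. apply vec_eq; [rewrite Ex| rewrite Ey| rewrite Ez]; replace l1 with 0 by lra;
    replace l3 with 0 by lra; rewrite H; ring. }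
  assert (N3 : l3 <> 1).
  { intro. apply Hn0. right; right. apply vec_eq; [rewrite Ex| rewrite Ey| rewrite Ez]; replace l2 with 0 by lra;
    replace l1 with 0 by lra; rewrite H; ring. }
  assert (Hother : forall j, in2 (T j) Px Py ->
     (0 < l1 -> is_vert (T j) a) /\ (0 < l2 -> is_vert (T j) b) /\ (0 < l3 -> is_vert (T j) c)).
  { intros j Hj. destruct (classic (j = i0)) as [->|Hne].
    - rewrite E0. repeat split; intros _; simpl; auto.
    - assert (Hpj : in_tri (T j) p) by (apply in2_p; auto).
      specialize (Hmeet i0 j (fun e => Hne (eq_sym e)) p). rewrite E0 in Hmeet.
      destruct (Hmeet Hi0 Hpj) as (m1 & m2 & m3 & M1 & M2 & M3 & Ms & Mp & V1 & V2 & V3).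
      assert (EPx : Px = m1 * vx a + m2 * vx b + m3 * vx c) by (unfold Px; rewrite Mp; simpl; ring).
      assert (EPy : Py = m1 * vy a + m2 * vy b + m3 * vy c) by (unfold Py; rewrite Mp; simpl; ring).
      assert (m1 = l1) by (rewrite <- Lv1, EPx, EPy; symmetry; apply lam1_comb; auto).
      assert (m2 = l2) by (rewrite <- Lv2, EPx, EPy; symmetry; apply lam2_comb; auto).
      assert (m3 = l3) by (rewrite <- Lv3, EPx, EPy; symmetry; apply lam3_comb; auto).
      subst m1 m2 m3. auto. }
  assert (Hsep : forall u w, (u = a /\ w = b) \/ (u = a /\ w = c) \/ (u = b /\ w = c) ->
            vx u <> vx w \/ vy u <> vy w).
  { intros u w Huw. apply NNPP; intro Hc. apply Hd0.
    assert (vx u = vx w) by (apply NNPP; intro; apply Hc; auto).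
    assert (vy u = vy w) by (apply NNPP; intro; apply Hc; auto).
    unfold den3. destruct Huw as [[-> ->]|[[-> ->]|[-> ->]]]; rewrite H, H0; ring. }
  destruct (Rle_lt_or_eq_dec 0 l1 H1) as [P1|P1];
  destruct (Rle_lt_or_eq_dec 0 l2 H2) as [P2|P2];
  destruct (Rle_lt_or_eq_dec 0 l3 H3) as [P3|P3].
  - apply (face_contra i0); rewrite E0; simpl; lra.
  - apply (pair_contra a b); [apply Hsep; auto|]. intros j Hj. destruct (Hother j Hj); tauto.
  - apply (pair_contra a c); [apply Hsep; auto|]. intros j Hj. destruct (Hother j Hj); tauto.
  - lra.
  - apply (pair_contra b c); [apply Hsep; auto|]. intros j Hj. destruct (Hother j Hj); tauto.
  - lra.
  - lra.
  - lra.
Qed.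

Definition kr i := krot (K i).
Definition Phi i x y := vx (kr i) * (y - Py) - vy (kr i) * (x - Px).

Lemma kapp_diff k X Y : vz (kapp k X) - vz (kapp k Y) =
  vx (krot k) * (vy X - vy Y) - vy (krot k) * (vx X - vx Y).
Proof. unfold kapp, cross; simpl. ring. Qed.

Lemma seg_in_tri (t : tri) u v tau : is_vert t u -> is_vert t v -> 0 <= tau <= 1 -> in_tri t (seg u v tau).
Proof.
  destruct t as [[a b] c]. unfold seg.
  intros Hu Hv Ht.
  destruct Hu as [ -> | [ -> | -> ]]; destruct Hv as [ -> | [ -> | -> ]].
  all: first
   [ apply in_tri_mk with 1 0 0; simpl; lra
   | apply in_tri_mk with (1 - tau) tau 0; simpl; lra
   | apply in_tri_mk with (1 - tau) 0 tau; simpl; lra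
   | apply in_tri_mk with tau (1 - tau) 0; simpl; lra
   | apply in_tri_mk with 0 1 0; simpl; lra
   | apply in_tri_mk with 0 (1 - tau) tau; simpl; lra
   | apply in_tri_mk with tau 0 (1 - tau); simpl; lra
   | apply in_tri_mk with 0 tau (1 - tau); simpl; lra
   | apply in_tri_mk with 0 0 1; simpl; lra ].
Qed.

Lemma den_distinct a b c : den3 a b c <> 0 -> a <> b /\ a <> c /\ b <> c.
Proof.
  intros H; unfold den3 in H; repeat split; intro E; subst; apply H; ring.
Qed.

Lemma comb_sign sg kx ky Px0 Py0 ux uy vx0 vy0 wx wy m1 m2 m3 x y :
  ux = Px0 -> uy = Py0 -> 0 <= m1 -> 0 <= m2 -> 0 <= m3 -> m1 + m2 + m3 = 1 ->
  x = m1 * ux + m2 * vx0 + m3 * wx -> y = m1 * uy + m2 * vy0 + m3 * wy -> (x <> Px0 \/ y <> Py0) ->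
  sg * (kx * (vy0 - Py0) - ky * (vx0 - Px0)) > 0 -> sg * (kx * (wy - Py0) - ky * (wx - Px0)) > 0 ->
  sg * (kx * (y - Py0) - ky * (x - Px0)) > 0.
Proof.
  intros Eu Ev H1 H2 H3 Hs Ex Ey Hne A B.
  replace (sg * (kx * (y - Py0) - ky * (x - Px0))) with
    (m2 * (sg * (kx * (vy0 - Py0) - ky * (vx0 - Px0))) + m3 * (sg * (kx * (wy - Py0) - ky * (wx - Px0))))
    by (rewrite Ex, Ey, <- Eu, <- Ev; replace m1 with (1 - m2 - m3) by lra; ring).
  destruct (Rle_lt_or_eq_dec 0 m2 H2) as [P2|P2]; destruct (Rle_lt_or_eq_dec 0 m3 H3) as [P3|P3].
  - assert (0 < m2 * (sg * (kx * (vy0 - Py0) - ky * (vx0 - Px0)))) by (apply Rmult_lt_0_compat; lra).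
    assert (0 < m3 * (sg * (kx * (wy - Py0) - ky * (wx - Px0)))) by (apply Rmult_lt_0_compat; lra). lra.
  - subst m3. assert (0 < m2 * (sg * (kx * (vy0 - Py0) - ky * (vx0 - Px0)))) by (apply Rmult_lt_0_compat; lra). lra.
  - subst m2. assert (0 < m3 * (sg * (kx * (wy - Py0) - ky * (wx - Px0)))) by (apply Rmult_lt_0_compat; lra). lra.
  - exfalso. subst m2 m3. replace m1 with 1 in * by lra. destruct Hne; [apply H; rewrite Ex| apply H; rewrite Ey]; subst; ring.
Qed.

Section Sign.
Variable sg : R.
Hypothesis Hex : exists j, is_vert (T j) p.
Hypothesis Hsg : forall q, incident_edge I T p q ->
  forall y, on_edge_minus_p p q y -> inC_int D f y -> sg * (vz (Z y) - vz (Z p)) > 0.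

Lemma edge_sign i q : in2 (T i) Px Py -> is_vert (T i) p -> is_vert (T i) q -> q <> p ->
  sg * (vx (kr i) * (vy q - Py) - vy (kr i) * (vx q - Px)) > 0.
Proof.
  intros HP Vp Vq Hqp.
  destruct (interior_open D Px Py p_int) as (r0 & Hr0 & Hint).
  set (N := (vx q - Px)^2 + (vy q - Py)^2).
  assert (HN : 0 <= N) by (unfold N; pose proof (pow2_ge_0 (vx q - Px)); pose proof (pow2_ge_0 (vy q - Py)); lra).
  set (tau := Rmin 1 (r0 / (2 * (N + 1)))).
  assert (Ht0 : 0 < tau) by (apply Rmin_glb_lt; [lra| apply Rdiv_lt_0_compat; lra]).
  assert (Ht1 : tau <= 1) by apply Rmin_l.
  assert (Ht2 : tau <= r0 / (2 * (N + 1))) by apply Rmin_r.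
  set (y := seg p q tau).
  assert (Hy : in_tri (T i) y) by (apply seg_in_tri; auto; lra).
  assert (Hyi : interior2 D (vx y) (vy y)).
  { apply Hint. unfold y, seg, pdist2, vadd, vscal, vsub; cbn [vx vy vz]. fold Px Py.
    replace ((Px + tau * (vx q - Px) - Px) ^ 2 + (Py + tau * (vy q - Py) - Py) ^ 2) with (tau * tau * N)
      by (unfold N; ring).
    assert (tau * N <= r0 / (2 * (N+1)) * N) by (apply Rmult_le_compat_r; lra).
    assert (r0 / (2 * (N+1)) * N < r0) by (apply Rlt_le_trans with (r0 / (2 * (N+1)) * (2 * (N + 1)));
      [apply Rmult_lt_compat_l; [apply Rdiv_lt_0_compat; lra| lra]| right; field; lra]).
    assert (tau * tau * N <= tau * N).
    { assert (0 <= tau * N) by (apply Rmult_le_pos; lra).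
      assert (tau * (tau * N) <= 1 * (tau * N)) by (apply Rmult_le_compat_r; lra). lra. }
    lra. }
  assert (HyC : inC_int D f y) by (split; auto; destruct (T_inC i y Hy); auto).
  assert (Hinc : incident_edge I T p q) by (exists i; auto).
  assert (Hon : on_edge_minus_p p q y) by (exists tau; split; [lra| auto]).
  specialize (Hsg q Hinc y Hon HyC).
  destruct Hdef as (_ & _ & HZ).
  rewrite (HZ i y Hy HyC), (Z_p i HP) in Hsg.
  rewrite kapp_diff in Hsg. fold (kr i) in Hsg. unfold y, seg in Hsg; simpl in Hsg. fold Px Py in Hsg.
  replace (vx (kr i) * (Py + tau * (vy q - Py) - Py) - vy (kr i) * (Px + tau * (vx q - Px) - Px))
    with (tau * (vx (kr i) * (vy q - Py) - vy (kr i) * (vx q - Px))) in Hsg by ring.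
  apply Rmult_gt_reg_l with tau; [lra|]. rewrite Rmult_0_r.
  replace (tau * (sg * (vx (kr i) * (vy q - Py) - vy (kr i) * (vx q - Px)))) with
    (sg * (tau * (vx (kr i) * (vy q - Py) - vy (kr i) * (vx q - Px)))) by ring. auto.
Qed.

Lemma Phi_sign i x y : in2 (T i) Px Py -> in2 (T i) x y -> (x <> Px \/ y <> Py) ->
  sg * Phi i x y > 0.
Proof.
  intros HP Hin Hne. pose proof (in2_pt i x y Hin) as HX.
  assert (Vp : is_vert (T i) p) by (apply vertex_all; [exact Hex| apply in2_p; auto]).
  pose proof (fun q => edge_sign i q HP Vp) as ES.
  pose proof (T_den i) as Hd.
  unfold Phi. unfold tden in Hd. destruct (T i) as [[a b] c] eqn:Ei.
  destruct (den_distinct a b c Hd) as (Dab & Dac & Dbc).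
  destruct (in_tri_comp _ _ _ _ HX) as (l1 & l2 & l3 & H1 & H2 & H3 & Hs & Ex & Ey & _); simpl in Ex, Ey.
  destruct Vp as [Ea|[Eb|Ec]].
  - apply (comb_sign sg (vx (kr i)) (vy (kr i)) Px Py (vx a) (vy a) (vx b) (vy b) (vx c) (vy c) l1 l2 l3);
      try (unfold Px, Py; rewrite Ea; reflexivity); auto.
    + apply ES; [right; left; auto| intro E; apply Dab; rewrite E; auto].
    + apply ES; [right; right; auto| intro E; apply Dac; rewrite E; auto].
  - apply (comb_sign sg (vx (kr i)) (vy (kr i)) Px Py (vx b) (vy b) (vx a) (vy a) (vx c) (vy c) l2 l1 l3);
      try (unfold Px, Py; rewrite Eb; reflexivity); try lra; try (rewrite Ex; ring); try (rewrite Ey; ring); auto.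
    + apply ES; [left; auto| intro E; apply Dab; rewrite E; auto].
    + apply ES; [right; right; auto| intro E; apply Dbc; rewrite E; auto].
  - apply (comb_sign sg (vx (kr i)) (vy (kr i)) Px Py (vx c) (vy c) (vx a) (vy a) (vx b) (vy b) l3 l1 l2);
      try (unfold Px, Py; rewrite Ec; reflexivity); try lra; try (rewrite Ex; ring); try (rewrite Ey; ring); auto.
    + apply ES; [left; auto| intro E; apply Dac; rewrite E; auto].
    + apply ES; [right; left; auto| intro E; apply Dbc; rewrite E; auto].
Qed.


Lemma concave_T i s0 : concave_on D (fun x y => s0 * f x y) ->
  forall x y, D x y -> s0 * f x y <= s0 * tFT (T i) x y.
Proof.
  intros Hconc x y HD.
  pose proof (T_den i) as Hd. pose proof (in2_T i) as Hin2. pose proof (in2_f i) as Hf.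
  pose proof (in2_pt i) as Hpt. pose proof (T_inC i) as HC.
  unfold tden, tl1, tl2, tl3, tFT in *. destruct (T i) as [[a b] c] eqn:Ei.
  set (l1 := lam1 a b c x y). set (l2 := lam2 a b c x y). set (l3 := lam3 a b c x y).
  set (x0 := 1/3 * vx a + 1/3 * vx b + 1/3 * vx c). set (y0 := 1/3 * vy a + 1/3 * vy b + 1/3 * vy c).
  assert (C1 : lam1 a b c x0 y0 = 1/3) by (apply lam1_comb; auto; lra).
  assert (C2 : lam2 a b c x0 y0 = 1/3) by (apply lam2_comb; auto; lra).
  assert (C3 : lam3 a b c x0 y0 = 1/3) by (apply lam3_comb; auto; lra).
  pose proof (Rabs_pos l1); pose proof (Rabs_pos l2); pose proof (Rabs_pos l3).
  set (e := 1 / (3 * (Rabs l1 + Rabs l2 + Rabs l3 + 1))).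
  assert (He : 0 < e) by (unfold e; apply Rdiv_lt_0_compat; lra).
  assert (He3 : e * Rabs l1 + e * Rabs l2 + e * Rabs l3 + e = 1/3) by (unfold e; field; lra).
  set (wx := (1 + e) * x0 + (- e) * x + 0 * 0). set (wy := (1 + e) * y0 + (- e) * y + 0 * 0).
  assert (Hl : forall (F : R -> R -> R) cx cy, aff2 F cx cy -> F wx wy = (1 + e) * F x0 y0 + (- e) * F x y + 0 * F 0 0).
  { intros F cx cy HF. unfold wx, wy. apply (aff2_comb F cx cy); auto; ring. }
  assert (Hpos : forall l, e * l <= e * Rabs l) by (intro l; apply Rmult_le_compat_l; [lra| apply Rle_abs]).
  assert (Hw : in2 (a,b,c) wx wy).
  { apply Hin2. rewrite (Hl _ _ _ (lam1_aff a b c)), (Hl _ _ _ (lam2_aff a b c)), (Hl _ _ _ (lam3_aff a b c)).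
    rewrite C1, C2, C3. fold l1 l2 l3. pose proof (Hpos l1); pose proof (Hpos l2); pose proof (Hpos l3).
    assert (0 <= e * Rabs l1) by (apply Rmult_le_pos; lra).
    assert (0 <= e * Rabs l2) by (apply Rmult_le_pos; lra).
    assert (0 <= e * Rabs l3) by (apply Rmult_le_pos; lra).
    repeat split; lra. }
  assert (Hz0 : in2 (a,b,c) x0 y0) by (apply Hin2; rewrite C1, C2, C3; lra).
  assert (HDw : D wx wy).
  { destruct (HC _ (Hpt _ _ Hw)) as [HDw _]. exact HDw. }
  set (t := e / (1 + e)).
  assert (Ht : 0 < t) by (unfold t; apply Rdiv_lt_0_compat; lra).
  assert (Ht1 : t < 1) by (unfold t; apply (Rmult_lt_reg_r (1 + e)); [lra| field_simplify; lra]).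
  specialize (Hconc wx wy x y t HDw HD ltac:(lra)). simpl in Hconc.
  assert (Ex : (1 - t) * wx + t * x = x0) by (unfold t, wx; field; lra).
  assert (Ey : (1 - t) * wy + t * y = y0) by (unfold t, wy; field; lra).
  rewrite Ex, Ey in Hconc.
  rewrite (Hf _ _ Hw), (Hf _ _ Hz0) in Hconc.
  assert (EF : FT3 a b c x0 y0 = (1 - t) * FT3 a b c wx wy + t * FT3 a b c x y + 0 * FT3 a b c 0 0).
  { rewrite <- Ex, <- Ey. replace ((1 - t) * wx + t * x) with ((1 - t) * wx + t * x + 0 * 0) by ring.
    replace ((1 - t) * wy + t * y) with ((1 - t) * wy + t * y + 0 * 0) by ring.
    apply (aff2_comb _ _ _ _ _ _ wx wy x y 0 0 (FT3_aff a b c)). ring. }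
  rewrite EF in Hconc.
  assert (t * (s0 * f x y) <= t * (s0 * FT3 a b c x y)) by lra.
  apply Rmult_le_reg_l with t; auto.
Qed.

Lemma lin2_zero a b e1x e1y e2x e2y : a * e1x + b * e1y = 0 -> a * e2x + b * e2y = 0 ->
  e1x * e2y - e1y * e2x <> 0 -> a = 0 /\ b = 0.
Proof.
  intros H1 H2 Hd. split.
  - apply (Rmult_eq_reg_r (e1x * e2y - e1y * e2x)); auto.
    replace (a * (e1x * e2y - e1y * e2x)) with (e2y * (a * e1x + b * e1y) - e1y * (a * e2x + b * e2y)) by ring.
    rewrite H1, H2; ring.
  - apply (Rmult_eq_reg_r (e1x * e2y - e1y * e2x)); auto.
    replace (b * (e1x * e2y - e1y * e2x)) with (e1x * (a * e2x + b * e2y) - e2x * (a * e1x + b * e1y)) by ring.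
    rewrite H1, H2; ring.
Qed.

Definition gx i := tcx (T i).
Definition gy i := tcy (T i).
Definition cc i := vz (kr i) - vx (kr i) * gx i - vy (kr i) * gy i.

Lemma FT_P i : in2 (T i) Px Py -> tFT (T i) Px Py = f Px Py.
Proof. intros H. symmetry. apply in2_f; auto. Qed.

Lemma f_grad i x y : in2 (T i) Px Py -> in2 (T i) x y ->
  f x y - f Px Py = gx i * (x - Px) + gy i * (y - Py).
Proof.
  intros HP H. rewrite (in2_f _ _ _ H), <- (FT_P i HP). rewrite (tFT_aff i x y Px Py).
  unfold gx, gy. ring.
Qed.


Lemma kill_diff i j x y : in2 (T i) Px Py -> in2 (T j) Px Py -> interior2 D x y ->
  in2 (T i) x y -> in2 (T j) x y ->
  let E := vsub (V x y (f x y)) p in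
  cross (vsub (kr i) (kr j)) E = vzero.
Proof.
  intros HPi HPj Hint Hi Hj E.
  pose proof (Z_tri i x y Hint Hi) as Zi. pose proof (Z_tri j x y Hint Hj) as Zj.
  pose proof (Z_p i HPi) as Zpi. pose proof (Z_p j HPj) as Zpj.
  rewrite Zi in Zj. rewrite Zpi in Zpj.
  unfold kr. unfold E.
  destruct (K i) as [ti ri]; destruct (K j) as [tj rj]. unfold kapp in Zj, Zpj; simpl in *.
  set (X := V x y (f x y)) in *.
  assert (A1 := f_equal vx Zj). assert (A2 := f_equal vy Zj). assert (A3 := f_equal vz Zj).
  assert (B1 := f_equal vx Zpj). assert (B2 := f_equal vy Zpj). assert (B3 := f_equal vz Zpj).
  unfold vadd, cross in *; simpl in *.
  apply vec_eq; simpl; lra.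
Qed.

Lemma same_tri i j x1 y1 x2 y2 : in2 (T i) Px Py -> in2 (T j) Px Py ->
  interior2 D x1 y1 -> interior2 D x2 y2 ->
  in2 (T i) x1 y1 -> in2 (T j) x1 y1 -> in2 (T i) x2 y2 -> in2 (T j) x2 y2 ->
  (x1 - Px) * (y2 - Py) - (y1 - Py) * (x2 - Px) <> 0 ->
  gx i = gx j /\ gy i = gy j /\ cc i = cc j.
Proof.
  intros HPi HPj I1 I2 Hi1 Hj1 Hi2 Hj2 Hdet.
  assert (G : gx i - gx j = 0 /\ gy i - gy j = 0).
  { apply (lin2_zero _ _ (x1 - Px) (y1 - Py) (x2 - Px) (y2 - Py)); auto.
    - pose proof (f_grad i x1 y1 HPi Hi1). pose proof (f_grad j x1 y1 HPj Hj1). lra.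
    - pose proof (f_grad i x2 y2 HPi Hi2). pose proof (f_grad j x2 y2 HPj Hj2). lra. }
  pose proof (kill_diff i j x1 y1 HPi HPj I1 Hi1 Hj1) as K1.
  pose proof (kill_diff i j x2 y2 HPi HPj I2 Hi2 Hj2) as K2.
  simpl in K1, K2.
  assert (K1x := f_equal vx K1). assert (K1y := f_equal vy K1). assert (K1z := f_equal vz K1).
  assert (K2z := f_equal vz K2).
  unfold cross, vsub in K1x, K1y, K1z, K2z; simpl in K1x, K1y, K1z, K2z. fold Px Py in K1x, K1y, K1z, K2z.
  set (dx := vx (kr i) - vx (kr j)) in *. set (dy := vy (kr i) - vy (kr j)) in *.
  set (dz := vz (kr i) - vz (kr j)) in *.
  assert (Dxy : dx = 0 /\ - dy = 0).
  { apply (lin2_zero _ _ (y1 - Py) (x1 - Px) (y2 - Py) (x2 - Px)).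
    - lra.
    - lra.
    - intro; apply Hdet; lra. }
  destruct Dxy as [Dx Dy].
  assert (Dz : dz = 0).
  { assert (A : dz * (y1 - Py) = 0) by (rewrite Dy in K1x || idtac; replace dy with 0 in K1x by lra; lra).
    assert (B : dz * (x1 - Px) = 0) by (replace dx with 0 in K1y by lra; lra).
    destruct (Req_dec (y1 - Py) 0) as [Hy|Hy].
    - destruct (Req_dec (x1 - Px) 0) as [Hx|Hx].
      + exfalso; apply Hdet; rewrite Hx, Hy; ring.
      + apply Rmult_integral in B; destruct B; [auto| contradiction].
    - apply Rmult_integral in A; destruct A; [auto| contradiction]. }
  destruct G as [G1 G2].
  split; [lra| split; [lra|]].
  unfold cc. unfold dx, dy, dz in *.
  replace (gx i) with (gx j) by lra. replace (gy i) with (gy j) by lra.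
  replace (vx (kr i)) with (vx (kr j)) by lra. replace (vy (kr i)) with (vy (kr j)) by lra.
  replace (vz (kr i)) with (vz (kr j)) by lra. reflexivity.
Qed.

Lemma crossing_alg s0 sg1 Ex Ey Ez gix giy gjx gjy bix biy biz bjx bjy bjz u1 u2 :
  (Ex <> 0 \/ Ey <> 0) ->
  Ez = gix * Ex + giy * Ey -> Ez = gjx * Ex + gjy * Ey ->
  (biy - bjy) * Ez - (biz - bjz) * Ey = 0 ->
  (biz - bjz) * Ex - (bix - bjx) * Ez = 0 ->
  (bix - bjx) * Ey - (biy - bjy) * Ex = 0 ->
  sg1 * (bjx * Ey - bjy * Ex) > 0 ->
  s0 * ((gix - gjx) * u1 + (giy - gjy) * u2) <= 0 ->
  Ex * u2 - Ey * u1 > 0 -> s0 <> 0 ->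
  s0 * sg1 * ((biz - bix * gix - biy * giy) - (bjz - bjx * gjx - bjy * gjy)) <= 0 /\
  ((gix <> gjx \/ giy <> gjy) -> s0 * sg1 * ((biz - bix * gix - biy * giy) - (bjz - bjx * gjx - bjy * gjy)) < 0).
Proof.
  intros HE Hi Hj C1 C2 C3 Hphi Hconc Hcr Hs0.
  set (N := Ex * Ex + Ey * Ey).
  assert (HN : 0 < N).
  { unfold N. destruct HE as [h|h]; [pose proof (sq_pos Ex h); pose proof (sq_nn Ey)| pose proof (sq_pos Ey h); pose proof (sq_nn Ex)]; lra. }
  set (dx := gix - gjx) in *. set (dy := giy - gjy) in *.
  assert (Hde : dx * Ex + dy * Ey = 0) by (unfold dx, dy; rewrite Hi in Hj; lra).
  set (k := dy * Ex - dx * Ey).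
  assert (Ndx : N * dx = - Ey * k).
  { unfold N, k. replace ((Ex * Ex + Ey * Ey) * dx) with (Ex * (dx * Ex) + dx * Ey * Ey) by ring.
    replace (dx * Ex) with (- (dy * Ey)) by lra. ring. }
  assert (Ndy : N * dy = Ex * k).
  { unfold N, k. replace ((Ex * Ex + Ey * Ey) * dy) with (dy * Ex * Ex + Ey * (dy * Ey)) by ring.
    replace (dy * Ey) with (- (dx * Ex)) by lra. ring. }
  set (Q := (biz - bjz) - (bix - bjx) * gix - (biy - bjy) * giy).
  assert (QEx : Q * Ex = 0).
  { unfold Q. replace ((biz - bjz - (bix - bjx) * gix - (biy - bjy) * giy) * Ex) with
      (((biz - bjz) * Ex - (bix - bjx) * Ez) + (bix - bjx) * (Ez - gix * Ex - giy * Ey) + giy * ((bix - bjx) * Ey - (biy - bjy) * Ex)) by ring.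
    rewrite C2, C3. replace (Ez - gix * Ex - giy * Ey) with 0 by lra. ring. }
  assert (QEy : Q * Ey = 0).
  { unfold Q. replace ((biz - bjz - (bix - bjx) * gix - (biy - bjy) * giy) * Ey) with
      (- ((biy - bjy) * Ez - (biz - bjz) * Ey) + (biy - bjy) * (Ez - gix * Ex - giy * Ey) - gix * ((bix - bjx) * Ey - (biy - bjy) * Ex)) by ring.
    rewrite C1, C3. replace (Ez - gix * Ex - giy * Ey) with 0 by lra. ring. }
  assert (HQ : Q = 0).
  { destruct HE as [h|h]; [apply Rmult_integral in QEx| apply Rmult_integral in QEy]; tauto. }
  assert (Ediff : (biz - bix * gix - biy * giy) - (bjz - bjx * gjx - bjy * gjy) = Q - bjx * dx - bjy * dy)
    by (unfold Q, dx, dy; ring).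
  rewrite Ediff, HQ.
  set (Phi0 := bjx * Ey - bjy * Ex) in *.
  assert (ND : N * (0 - bjx * dx - bjy * dy) = k * Phi0).
  { replace (N * (0 - bjx * dx - bjy * dy)) with (- bjx * (N * dx) - bjy * (N * dy)) by ring.
    rewrite Ndx, Ndy. unfold Phi0; ring. }
  set (cr := Ex * u2 - Ey * u1) in *.
  assert (Hk : s0 * k * cr <= 0).
  { replace (s0 * k * cr) with (N * (s0 * (dx * u1 + dy * u2))).
    - assert (0 <= N * - (s0 * (dx * u1 + dy * u2))) by (apply Rmult_le_pos; lra). lra.
    - replace (N * (s0 * (dx * u1 + dy * u2))) with (s0 * ((N * dx) * u1 + (N * dy) * u2)) by ring.
      rewrite Ndx, Ndy. unfold cr; ring. }
  assert (Hsk : s0 * k <= 0).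
  { destruct (Rle_or_lt (s0 * k) 0) as [h|h]; auto.
    assert (0 < s0 * k * cr) by (apply Rmult_lt_0_compat; lra). lra. }
  assert (Main : N * (s0 * sg1 * (0 - bjx * dx - bjy * dy)) = (s0 * k) * (sg1 * Phi0)).
  { replace (N * (s0 * sg1 * (0 - bjx * dx - bjy * dy))) with (s0 * sg1 * (N * (0 - bjx * dx - bjy * dy))) by ring.
    rewrite ND. ring. }
  split.
  - apply Rnot_lt_le; intro Hc.
    assert (0 < N * (s0 * sg1 * (0 - bjx * dx - bjy * dy))) by (apply Rmult_lt_0_compat; lra).
    rewrite Main in H.
    assert (0 <= - (s0 * k) * (sg1 * Phi0)) by (apply Rmult_le_pos; lra). lra.
  - intros Hg.
    assert (Hk0 : k <> 0).
    { intro Hk0. destruct Hg as [Hg|Hg].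
      - apply Hg. assert (N * dx = 0) by (rewrite Ndx, Hk0; ring).
        apply Rmult_integral in H; destruct H; [lra| unfold dx in H; lra].
      - apply Hg. assert (N * dy = 0) by (rewrite Ndy, Hk0; ring).
        apply Rmult_integral in H; destruct H; [lra| unfold dy in H; lra]. }
    assert (Hsk' : s0 * k < 0).
    { destruct Hsk as [h|h]; auto. apply Rmult_integral in h. destruct h; contradiction. }
    apply Rnot_le_lt; intro Hc.
    assert (0 <= N * (s0 * sg1 * (0 - bjx * dx - bjy * dy))) by (apply Rmult_le_pos; lra).
    rewrite Main in H.
    assert (0 < - (s0 * k) * (sg1 * Phi0)) by (apply Rmult_lt_0_compat; lra). lra.
Qed.

Lemma crossing s0 i j x y u1 u2 eps : (s0 = 1 \/ s0 = -1) -> concave_on D (fun x y => s0 * f x y) ->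
  in2 (T i) Px Py -> in2 (T j) Px Py -> interior2 D x y -> in2 (T i) x y -> in2 (T j) x y ->
  (x <> Px \/ y <> Py) -> 0 < eps -> in2 (T i) (x + eps * u1) (y + eps * u2) ->
  (x - Px) * u2 - (y - Py) * u1 > 0 ->
  s0 * sg * (cc i - cc j) <= 0 /\ ((gx i <> gx j \/ gy i <> gy j) -> s0 * sg * (cc i - cc j) < 0).
Proof.
  intros Hs0 Hconc HPi HPj Hint Hi Hj Hne He Hi' Hcr.
  pose proof (kill_diff i j x y HPi HPj Hint Hi Hj) as KD. simpl in KD.
  assert (K1 := f_equal vx KD). assert (K2 := f_equal vy KD). assert (K3 := f_equal vz KD).
  unfold cross, vsub in K1, K2, K3; simpl in K1, K2, K3. fold Px Py in K1, K2, K3.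
  try rewrite p_z in K1; try rewrite p_z in K2.
  unfold cc.
  apply (crossing_alg s0 sg (x - Px) (y - Py) (f x y - f Px Py) (gx i) (gy i) (gx j) (gy j)
    (vx (kr i)) (vy (kr i)) (vz (kr i)) (vx (kr j)) (vy (kr j)) (vz (kr j)) u1 u2).
  - destruct Hne; [left| right]; intro; apply H; lra.
  - apply f_grad; auto.
  - apply f_grad; auto.
  - lra.
  - lra.
  - lra.
  - pose proof (Phi_sign j x y HPj Hj Hne) as Hp. unfold Phi in Hp. lra.
  - set (x' := x + eps * u1). set (y' := y + eps * u2).
    assert (HD' : D x' y') by (destruct (T_inC i _ (in2_pt i x' y' Hi')); auto).
    pose proof (concave_T j s0 Hconc x' y' HD') as Hc.
    pose proof (f_grad i x' y' HPi Hi') as Gi.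
    assert (Gj : tFT (T j) x' y' - f Px Py = gx j * (x' - Px) + gy j * (y' - Py)).
    { rewrite <- (FT_P j HPj), (tFT_aff j x' y' Px Py). unfold gx, gy. ring. }
    pose proof (f_grad i x y HPi Hi) as G0i. pose proof (f_grad j x y HPj Hj) as G0j.
    assert (Hdot : (gx i - gx j) * (x - Px) + (gy i - gy j) * (y - Py) = 0) by lra.
    assert (E : s0 * (f x' y' - tFT (T j) x' y') = eps * (s0 * ((gx i - gx j) * u1 + (gy i - gy j) * u2))).
    { replace (f x' y' - tFT (T j) x' y') with ((f x' y' - f Px Py) - (tFT (T j) x' y' - f Px Py)) by ring.
      rewrite Gi, Gj. unfold x', y'.
      replace ((gx i * (x + eps * u1 - Px) + gy i * (y + eps * u2 - Py)) -
               (gx j * (x + eps * u1 - Px) + gy j * (y + eps * u2 - Py)))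
        with (((gx i - gx j) * (x - Px) + (gy i - gy j) * (y - Py)) + eps * ((gx i - gx j) * u1 + (gy i - gy j) * u2)) by ring.
      rewrite Hdot. ring. }
    assert (eps * (s0 * ((gx i - gx j) * u1 + (gy i - gy j) * u2)) <= 0) by lra.
    apply Rnot_lt_le; intro Hc'.
    assert (0 < eps * (s0 * ((gx i - gx j) * u1 + (gy i - gy j) * u2))) by (apply Rmult_lt_0_compat; lra). lra.
  - lra.
  - destruct Hs0; lra.
Qed.

Lemma in2_conv i x1 y1 x2 y2 th : 0 <= th <= 1 -> in2 (T i) x1 y1 -> in2 (T i) x2 y2 ->
  in2 (T i) ((1 - th) * x1 + th * x2) ((1 - th) * y1 + th * y2).
Proof.
  intros Hth H1 H2. rewrite in2_T in H1, H2 |- *.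
  assert (G : forall (F : R -> R -> R) cx cy, aff2 F cx cy -> 0 <= F x1 y1 -> 0 <= F x2 y2 ->
     0 <= F ((1 - th) * x1 + th * x2) ((1 - th) * y1 + th * y2)).
  { intros F cx cy HF A B.
    replace ((1 - th) * x1 + th * x2) with ((1 - th) * x1 + th * x2 + 0 * 0) by ring.
    replace ((1 - th) * y1 + th * y2) with ((1 - th) * y1 + th * y2 + 0 * 0) by ring.
    rewrite (aff2_comb F cx cy (1 - th) th 0 x1 y1 x2 y2 0 0 HF); [|ring].
    assert (0 <= (1 - th) * F x1 y1) by (apply Rmult_le_pos; lra).
    assert (0 <= th * F x2 y2) by (apply Rmult_le_pos; lra). lra. }
  destruct (tl_aff1 i) as (c1 & d1 & A1). destruct (tl_aff2 i) as (c2 & d2 & A2).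
  destruct (tl_aff3 i) as (c3 & d3 & A3).
  repeat split; [apply (G _ _ _ A1)| apply (G _ _ _ A2)| apply (G _ _ _ A3)]; tauto.
Qed.

Lemma main_case s0 : (s0 = 1 \/ s0 = -1) -> concave_on D (fun x y => s0 * f x y) -> False.
Proof.
  intros Hs0 Hconc.
  destruct good_radius as (r & L & Hr & Hg).
  set (rho := Rmin 1 (r / 4)).
  assert (Hrho : 0 < rho) by (apply Rmin_glb_lt; lra).
  assert (Hrho1 : rho <= 1) by apply Rmin_l.
  assert (Hrho2 : rho <= r / 4) by apply Rmin_r.
  set (wx := fun t => Px + rho * sqx t). set (wy := fun t => Py + rho * sqy t).
  assert (Hin : forall t, 0 <= t <= 5 -> pdist2 (wx t) (wy t) Px Py < r).
  { intros t Ht. unfold pdist2, wx, wy.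
    replace ((Px + rho * sqx t - Px) ^ 2 + (Py + rho * sqy t - Py) ^ 2) with
      (rho * rho * (sqx t * sqx t + sqy t * sqy t)) by ring.
    pose proof (sq_bound t Ht).
    assert (rho * rho <= rho * (r / 4)) by (apply Rmult_le_compat_l; lra).
    assert (rho * (r/4) <= 1 * (r / 4)) by (apply Rmult_le_compat_r; lra).
    assert (0 <= sqx t * sqx t + sqy t * sqy t) by (pose proof (sq_nn (sqx t)); pose proof (sq_nn (sqy t)); lra).
    assert (rho * rho * (sqx t * sqx t + sqy t * sqy t) <= rho * rho * 2)
      by (apply Rmult_le_compat_l; [apply sq_nn| lra]).
    lra. }
  assert (Hint : forall t, 0 <= t <= 5 -> interior2 D (wx t) (wy t)) by (intros t Ht; apply (Hg _ _ (Hin t Ht))).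
  assert (Hcov : forall t, 0 <= t <= 5 -> exists i, In i L /\ (in2 (T i) Px Py /\ in2 (T i) (wx t) (wy t))).
  { intros t Ht. destruct (Hg _ _ (Hin t Ht)) as (_ & (i & HiL & Hi) & Hall).
    exists i; split; auto; split; auto. apply (Hall i Hi). }
  assert (Hpath : forall k a1 u1 a2 u2 s, SideOK k a1 u1 a2 u2 -> k <= s <= k + 1 ->
     wx s = (Px + rho * a1) + s * (rho * u1) /\ wy s = (Py + rho * a2) + s * (rho * u2)).
  { intros k a1 u1 a2 u2 s Hk Hs. destruct Hk as (_ & _ & S). destruct (S s Hs) as [E1 E2].
    unfold wx, wy. rewrite E1, E2. split; ring. }
  assert (HRN : forall t, 0 <= t < 5 -> exists i d k a1 u1 a2 u2, in2 (T i) Px Py /\ 0 < d /\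
     SideOK k a1 u1 a2 u2 /\ k <= t /\ t + d <= k + 1 /\
     forall s, t <= s <= t + d -> in2 (T i) (wx s) (wy s)).
  { intros t Ht. destruct (side_right t Ht) as (k & a1 & u1 & a2 & u2 & Hk & Hkt).
    pose proof (side_range _ _ _ _ _ Hk) as Hkr.
    destruct (RN_path L (fun i => in2 (T i) Px Py) (Px + rho * a1) (Py + rho * a2) (rho * u1) (rho * u2) t (k + 1))
      as (i & d0 & HQ & Hd0 & Hi); [lra| |].
    { intros s' Hs'. destruct (Hcov s' ltac:(lra)) as (i & HiL & HQ & Hi).
      destruct (Hpath k a1 u1 a2 u2 s' Hk ltac:(lra)) as [E1 E2].
      exists i; split; auto; split; auto. rewrite <- E1, <- E2; auto. }
    exists i, (Rmin d0 (k + 1 - t)), k, a1, u1, a2, u2.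
    pose proof (Rmin_l d0 (k + 1 - t)). pose proof (Rmin_r d0 (k + 1 - t)).
    split; auto. split; [apply Rmin_glb_lt; lra|]. split; auto. split; [lra|]. split; [lra|].
    intros s Hs. destruct (Hpath k a1 u1 a2 u2 s Hk ltac:(lra)) as [E1 E2].
    rewrite E1, E2. apply Hi. lra. }
  assert (HLN : forall t, 0 < t <= 5 -> exists j d k a1 u1 a2 u2, in2 (T j) Px Py /\ 0 < d /\
     SideOK k a1 u1 a2 u2 /\ k <= t - d /\ t <= k + 1 /\
     forall s, t - d <= s <= t -> in2 (T j) (wx s) (wy s)).
  { intros t Ht. destruct (side_left t Ht) as (k & a1 & u1 & a2 & u2 & Hk & Hkt).
    pose proof (side_range _ _ _ _ _ Hk) as Hkr.
    destruct (LN_path L (fun i => in2 (T i) Px Py) (Px + rho * a1) (Py + rho * a2) (rho * u1) (rho * u2) k t)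
      as (i & d0 & HQ & Hd0 & Hi); [lra| |].
    { intros s' Hs'. destruct (Hcov s' ltac:(lra)) as (i & HiL & HQ & Hi).
      destruct (Hpath k a1 u1 a2 u2 s' Hk ltac:(lra)) as [E1 E2].
      exists i; split; auto; split; auto. rewrite <- E1, <- E2; auto. }
    exists i, (Rmin d0 (t - k)), k, a1, u1, a2, u2.
    pose proof (Rmin_l d0 (t - k)). pose proof (Rmin_r d0 (t - k)).
    split; auto. split; [apply Rmin_glb_lt; lra|]. split; auto. split; [lra|]. split; [lra|].
    intros s Hs. destruct (Hpath k a1 u1 a2 u2 s Hk ltac:(lra)) as [E1 E2].
    rewrite E1, E2. apply Hi. lra. }
  assert (Hsame : forall i j k a1 u1 a2 u2 s s2, SideOK k a1 u1 a2 u2 -> k <= s -> s < s2 -> s2 <= k + 1 ->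
     in2 (T i) Px Py -> in2 (T j) Px Py -> in2 (T i) (wx s) (wy s) -> in2 (T i) (wx s2) (wy s2) ->
     in2 (T j) (wx s) (wy s) -> in2 (T j) (wx s2) (wy s2) ->
     gx i = gx j /\ gy i = gy j /\ cc i = cc j).
  { intros i j k a1 u1 a2 u2 s s2 Hk H1 H2 H3 HPi HPj Hi1 Hi2 Hj1 Hj2.
    pose proof (side_range _ _ _ _ _ Hk) as Hkr.
    apply (same_tri i j (wx s) (wy s) (wx s2) (wy s2)); auto; try (apply Hint; lra).
    unfold wx, wy.
    replace ((Px + rho * sqx s - Px) * (Py + rho * sqy s2 - Py) - (Py + rho * sqy s - Py) * (Px + rho * sqx s2 - Px))
      with (rho * rho * (sqx s * sqy s2 - sqy s * sqx s2)) by ring.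
    rewrite (side_cross k a1 u1 a2 u2 s s2 Hk ltac:(lra) ltac:(lra)).
    pose proof (sq_pos rho ltac:(lra)). intro E.
    apply Rmult_integral in E. destruct E; lra. }
  destruct (Hcov 0 ltac:(lra)) as (i0 & _ & _ & _).
  assert (HR' : forall t, exists i, 0 <= t < 5 -> exists d k a1 u1 a2 u2, in2 (T i) Px Py /\ 0 < d /\
     SideOK k a1 u1 a2 u2 /\ k <= t /\ t + d <= k + 1 /\
     forall s, t <= s <= t + d -> in2 (T i) (wx s) (wy s)).
  { intros t. destruct (classic (0 <= t < 5)) as [Ht|Ht].
    - destruct (HRN t Ht) as (i & rest). exists i; intros _; exact rest.
    - exists i0; intros H; contradiction. }
  set (iR := fun t => proj1_sig (constructive_indefinite_description _ (HR' t))).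
  assert (HiR : forall t, 0 <= t < 5 -> exists d k a1 u1 a2 u2, in2 (T (iR t)) Px Py /\ 0 < d /\
     SideOK k a1 u1 a2 u2 /\ k <= t /\ t + d <= k + 1 /\
     forall s, t <= s <= t + d -> in2 (T (iR t)) (wx s) (wy s)).
  { intros t Ht. exact (proj2_sig (constructive_indefinite_description _ (HR' t)) Ht). }
  clearbody iR.
  assert (HP1 : forall t, 0 <= t < 4 -> exists d, 0 < d /\ forall s, t < s < t + d -> s <= 4 ->
     gx (iR s) = gx (iR t) /\ gy (iR s) = gy (iR t) /\ cc (iR s) = cc (iR t)).
  { intros t Ht. destruct (HiR t ltac:(lra)) as (d & k & a1 & u1 & a2 & u2 & HPt & Hd & Hk & Hkt & Htd & Hin_t).
    exists d; split; auto. intros s Hs Hs4.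
    destruct (HiR s ltac:(lra)) as (d' & k' & a1' & u1' & a2' & u2' & HPs & Hd' & _ & _ & _ & Hin_s).
    set (s2 := s + Rmin d' (t + d - s)).
    pose proof (Rmin_l d' (t + d - s)). pose proof (Rmin_r d' (t + d - s)).
    assert (0 < Rmin d' (t + d - s)) by (apply Rmin_glb_lt; lra).
    apply (Hsame (iR s) (iR t) k a1 u1 a2 u2 s s2 Hk); auto; try (unfold s2; lra);
      [apply Hin_s| apply Hin_s| apply Hin_t| apply Hin_t]; unfold s2; lra. }
  assert (HP2 : forall t, 0 < t <= 4 -> exists j d, 0 < d /\
     (forall s, t - d < s < t -> 0 <= s -> gx (iR s) = gx j /\ gy (iR s) = gy j /\ cc (iR s) = cc j) /\
     s0 * sg * (cc (iR t) - cc j) <= 0 /\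
     ((gx (iR t) <> gx j \/ gy (iR t) <> gy j) -> s0 * sg * (cc (iR t) - cc j) < 0)).
  { intros t Ht. destruct (HLN t ltac:(lra)) as (j & d & k & a1 & u1 & a2 & u2 & HPj & Hd & Hk & Hkt & Htk & Hin_j).
    exists j, d. split; auto. split.
    - intros s Hs Hs0'.
      destruct (HiR s ltac:(lra)) as (d' & k' & a1' & u1' & a2' & u2' & HPs & Hd' & _ & _ & _ & Hin_s).
      set (s2 := s + Rmin d' (t - s)).
      pose proof (Rmin_l d' (t - s)). pose proof (Rmin_r d' (t - s)).
      assert (0 < Rmin d' (t - s)) by (apply Rmin_glb_lt; lra).
      apply (Hsame (iR s) j k a1 u1 a2 u2 s s2 Hk); auto; try (unfold s2; lra);
        [apply Hin_s| apply Hin_s| apply Hin_j| apply Hin_j]; unfold s2; lra.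
    - destruct (HiR t ltac:(lra)) as (dR & kR & a1R & u1R & a2R & u2R & HPt & HdR & HkR & HkRt & HtdR & Hin_t).
      pose proof (side_range _ _ _ _ _ HkR) as HkRr.
      destruct (Hpath kR a1R u1R a2R u2R t HkR ltac:(lra)) as [Et1 Et2].
      destruct (Hpath kR a1R u1R a2R u2R (t + dR) HkR ltac:(lra)) as [Ed1 Ed2].
      pose proof (side_dir kR a1R u1R a2R u2R t HkR ltac:(lra)) as Hdir.
      apply (crossing s0 (iR t) j (wx t) (wy t) (rho * u1R) (rho * u2R) dR); auto.
      + apply Hint; lra.
      + apply Hin_t; lra.
      + apply Hin_j; lra.
      + unfold wx, wy. destruct (Req_dec (sqx t) 0) as [h|h].
        * right. rewrite h in Hdir. assert (sqy t <> 0) by (intro h'; rewrite h' in Hdir; lra).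
          intro E. assert (rho * sqy t = 0) by lra. apply Rmult_integral in H0. destruct H0; lra.
        * left. intro E. assert (rho * sqx t = 0) by lra. apply Rmult_integral in H. destruct H; lra.
      + replace (wx t + dR * (rho * u1R)) with (wx (t + dR)) by (rewrite Ed1, Et1; ring).
        replace (wy t + dR * (rho * u2R)) with (wy (t + dR)) by (rewrite Ed2, Et2; ring).
        apply Hin_t; lra.
      + unfold wx, wy.
        replace ((Px + rho * sqx t - Px) * (rho * u2R) - (Py + rho * sqy t - Py) * (rho * u1R))
          with (rho * rho * (sqx t * u2R - sqy t * u1R)) by ring.
        rewrite Hdir. pose proof (sq_pos rho ltac:(lra)). lra. }
  assert (HP3 : cc (iR 4) = cc (iR 0)).
  { destruct (HiR 0 ltac:(lra)) as (d0 & k0 & a10 & u10 & a20 & u20 & HP0 & Hd0 & Hk0 & Hk0t & Htd0 & Hin0).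
    destruct (HiR 4 ltac:(lra)) as (d4 & k4 & a14 & u14 & a24 & u24 & HP4 & Hd4 & Hk4 & Hk4t & Htd4 & Hin4).
    pose proof (side_range _ _ _ _ _ Hk4).
    set (m := Rmin d0 d4).
    assert (Hm0 : m <= d0) by apply Rmin_l. assert (Hm4 : m <= d4) by apply Rmin_r.
    assert (0 < m) by (apply Rmin_glb_lt; lra).
    assert (Hm1 : m <= 1) by lra.
    assert (W : forall s, 0 <= s <= 1 -> wx (s + 4) = wx s /\ wy (s + 4) = wy s).
    { intros s Hs. destruct (sq_period s Hs) as [A B]. unfold wx, wy. rewrite A, B. auto. }
    destruct (W 0 ltac:(lra)) as [W01 W02]. destruct (W m ltac:(lra)) as [Wm1 Wm2].
    replace (0 + 4) with 4 in W01, W02 by ring.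
    assert (Hi4_0 : in2 (T (iR 4)) (wx 0) (wy 0)) by (rewrite <- W01, <- W02; apply Hin4; lra).
    assert (Hi4_m : in2 (T (iR 4)) (wx m) (wy m)) by (rewrite <- Wm1, <- Wm2; apply Hin4; lra).
    destruct (Hsame (iR 4) (iR 0) 0 1 0 (-1) 2 0 m side0) as (_ & _ & E); auto; try lra;
      apply Hin0; lra. }
  set (h := fun t => s0 * sg * cc (iR t)).
  assert (Hmono : forall x y, 0 <= x -> x <= y -> y <= 4 -> h y <= h x).
  { apply (mono_local2 h 0 4).
    - intros t Ht. destruct (HP1 t Ht) as (d & Hd & H). exists d; split; auto.
      intros s Hs Hs4. unfold h. destruct (H s Hs Hs4) as (_ & _ & ->). lra.
    - intros t Ht. destruct (HP2 t Ht) as (j & d & Hd & H & Hc & _). exists d; split; auto.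
      intros s Hs Hs0'. unfold h. destruct (H s Hs Hs0') as (_ & _ & ->).
      replace (s0 * sg * cc (iR t)) with (s0 * sg * (cc (iR t) - cc j) + s0 * sg * cc j) by ring. lra. }
  assert (Hh04 : h 4 = h 0) by (unfold h; rewrite HP3; auto).
  assert (HgL : forall t, 0 < t <= 4 -> exists d, 0 < d /\ forall s, t - d < s < t -> 0 <= s ->
     gx (iR t) = gx (iR s) /\ gy (iR t) = gy (iR s)).
  { intros t Ht. destruct (HP2 t Ht) as (j & d & Hd & H & Hc & Hstrict).
    set (s1 := Rmax 0 (t - d / 2)).
    assert (Hs1a : 0 <= s1) by apply Rmax_l. assert (Hs1b : t - d / 2 <= s1) by apply Rmax_r.
    assert (Hs1c : s1 < t) by (unfold s1; apply Rmax_lub_lt; lra).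
    destruct (H s1 ltac:(lra) Hs1a) as (_ & _ & Ec).
    assert (Heq : s0 * sg * (cc (iR t) - cc j) = 0).
    { pose proof (Hmono 0 s1 ltac:(lra) ltac:(lra) ltac:(lra)).
      pose proof (Hmono t 4 ltac:(lra) ltac:(lra) ltac:(lra)).
      unfold h in *. rewrite Ec in *. lra. }
    assert (Hgj : gx (iR t) = gx j /\ gy (iR t) = gy j).
    { split; apply NNPP; intro Hn; [specialize (Hstrict (or_introl Hn))| specialize (Hstrict (or_intror Hn))]; lra. }
    exists d; split; auto. intros s Hs Hs0'. destruct (H s Hs Hs0') as (E1 & E2 & _). lra. }
  assert (Gx : forall t, 0 <= t <= 4 -> gx (iR t) = gx (iR 0)).
  { apply (const_local (fun t => gx (iR t)) 0 4).
    - intros t Ht. destruct (HP1 t Ht) as (d & Hd & H). exists d; split; auto. intros s Hs Hs4. apply H; auto.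
    - intros t Ht. destruct (HgL t Ht) as (d & Hd & H). exists d; split; auto. intros s Hs Hs4. apply H; auto. }
  assert (Gy : forall t, 0 <= t <= 4 -> gy (iR t) = gy (iR 0)).
  { apply (const_local (fun t => gy (iR t)) 0 4).
    - intros t Ht. destruct (HP1 t Ht) as (d & Hd & H). exists d; split; auto. intros s Hs Hs4. apply H; auto.
    - intros t Ht. destruct (HgL t Ht) as (d & Hd & H). exists d; split; auto. intros s Hs Hs4. apply H; auto. }
  apply affine_ball_contra. exists (rho * rho), (gx (iR 0)), (gy (iR 0)).
  split; [apply sq_pos; lra|]. intros x y Hxy.
  destruct (classic (x = Px /\ y = Py)) as [[-> ->]|Hne].
  { ring. }
  destruct (sq_decomp (x - Px) (y - Py)) as (t & m & Ht & Hm & Hmm & Ex & Ey).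
  { destruct (classic (x = Px)) as [h1|h1]; [right; intro; apply Hne; split; lra| left; intro; apply h1; lra]. }
  assert (Hmr : m < rho).
  { unfold pdist2 in Hxy. replace ((x - Px) ^ 2 + (y - Py) ^ 2) with ((x - Px) * (x - Px) + (y - Py) * (y - Py)) in Hxy by ring.
    destruct (Rlt_or_le m rho) as [h1|h1]; auto.
    assert (rho * rho <= m * m) by (apply Rmult_le_compat; lra). lra. }
  destruct (HiR t ltac:(lra)) as (d & k & a1 & u1 & a2 & u2 & HPt & Hd & Hk & Hkt & Htd & Hin_t).
  assert (Hw : in2 (T (iR t)) (wx t) (wy t)) by (apply Hin_t; lra).
  set (th := m / rho).
  assert (Hth : 0 <= th <= 1).
  { unfold th. split; [apply Rlt_le, Rdiv_lt_0_compat; lra|].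
    apply (Rmult_le_reg_r rho); auto. unfold Rdiv. rewrite Rmult_assoc, Rinv_l, Rmult_1_l, Rmult_1_r; lra. }
  assert (Hxy' : in2 (T (iR t)) x y).
  { replace x with ((1 - th) * Px + th * wx t) by (unfold th, wx; replace x with (Px + m * sqx t) by lra; field; lra).
    replace y with ((1 - th) * Py + th * wy t) by (unfold th, wy; replace y with (Py + m * sqy t) by lra; field; lra).
    apply in2_conv; auto. }
  pose proof (f_grad (iR t) x y HPt Hxy') as G.
  rewrite (Gx t Ht), (Gy t Ht) in G. lra.
Qed.
End Sign.
End Main.

Theorem proposition2 (D : R -> R -> Prop) (f : R -> R -> R) (I : Type)
    (T : I -> tri) (K : I -> killing) (Z : vec -> vec) (p : vec) :
  polyhedral_convex_cap D f ->
  inf_isometric_deformation D f I T K Z ->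
  is_vertexC D f p ->
  (forall q, incident_edge I T p q ->
     (forall y, on_edge_minus_p p q y -> inC_int D f y -> vz (Z y) - vz (Z p) > 0) \/
     (forall y, on_edge_minus_p p q y -> inC_int D f y -> vz (Z y) - vz (Z p) < 0) \/
     (forall y, on_edge_minus_p p q y -> inC_int D f y -> vz (Z y) - vz (Z p) = 0)) ->
  ~ (forall q, incident_edge I T p q ->
       forall y, on_edge_minus_p p q y -> inC_int D f y -> vz (Z y) - vz (Z p) > 0) /\
  ~ (forall q, incident_edge I T p q ->
       forall y, on_edge_minus_p p q y -> inC_int D f y -> vz (Z y) - vz (Z p) < 0).
Proof.
  intros Hcap Hdef Hvert _.
  assert (core : forall sg, (forall q, incident_edge I T p q ->
     forall y, on_edge_minus_p p q y -> inC_int D f y -> sg * (vz (Z y) - vz (Z p)) > 0) -> False).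
  { intros sg Hsg. destruct (classic (exists j, is_vert (T j) p)) as [Hex|Hn].
    - pose proof Hcap as (_ & _ & _ & _ & _ & _ & s0 & Hs0 & Hconc & _).
      exact (main_case D f I T K Z p Hcap Hdef Hvert sg Hex Hsg s0 Hs0 Hconc).
    - apply (none_case D f I T K Z p Hcap Hdef Hvert). intros j Hj; apply Hn; eauto. }
  split; intro H.
  - apply (core 1). intros q Hq y Hy Hc. specialize (H q Hq y Hy Hc). lra.
  - apply (core (-1)). intros q Hq y Hy Hc. specialize (H q Hq y Hy Hc). lra.
Qed.
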